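(* Any strongly regular Weingarten surface in $\mathbb R^3$ admits locally geometric principal parameters.
   Context: For a surface $x=x(u,v)$ without umbilical points parameterized by principal parameters ($F=M=0$, with $E,F,G$, $L,M,N$ the coefficients of the first and second fundamental forms): $\nu_1=L/E$, $\nu_2=N/G$, $\gamma_1=-\frac{E_v}{2E\sqrt G}$, $\gamma_2=\frac{G_u}{2G\sqrt E}$. The surface is strongly regular if $(\nu_1-\nu_2)\gamma_1\gamma_2\neq0$, with the convention $\nu_1-\nu_2>0$. A strongly regular surface is Weingarten if there exist differentiable $f(\nu),g(\nu)$, $\nu\in\mathcal I\subseteq\mathbb R$, with $f-g>0$, $f'g'\neq0$, and a differentiable $\nu(u,v)\in\mathcal I$ with $\nu_u\nu_v\neq0$, such that $\nu_1=f(\nu)$, $\nu_2=g(\nu)$. With $\Phi$ an antiderivative of $f'/(f-g)$ and $\Psi$ an antiderivative of $g'/(g-f)$, put $\lambda=\ln\sqrt E+\Phi(\nu)$ and $\mu=\ln\sqrt G+\Psi(\nu)$ (one always has $\lambda_v=0$, $\mu_u=0$). Principal parameters $(u,v)$ on a strongly regular Weingarten surface are called geometric principal parameters if $\lambda$ and $\mu$ are constants. *)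

(* Defs.v *)
From Stdlib Require Import Reals.
From Coquelicot Require Import Coquelicot.
Open Scope R_scope.

Definition vec3 := (R * R * R)%type.
Definition v1 (a : vec3) : R := fst (fst a).
Definition v2 (a : vec3) : R := snd (fst a).
Definition v3 (a : vec3) : R := snd a.
Definition dot (a b : vec3) : R := v1 a * v1 b + v2 a * v2 b + v3 a * v3 b.
Definition cross (a b : vec3) : vec3 :=
  (v2 a * v3 b - v3 a * v2 b, v3 a * v1 b - v1 a * v3 b, v1 a * v2 b - v2 a * v1 b).
Definition vscale (c : R) (a : vec3) : vec3 := (c * v1 a, c * v2 a, c * v3 a).
Definition vnorm (a : vec3) : R := sqrt (dot a a).

Definition pu (h : R -> R -> R) (u v : R) : R := Derive (fun t => h t v) u.
Definition pv (h : R -> R -> R) (u v : R) : R := Derive (fun t => h u t) v.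

Definition open2 (D : R -> R -> Prop) : Prop := open (fun p : R * R => D (fst p) (snd p)).

Fixpoint Ck (k : nat) (h : R -> R -> R) (D : R -> R -> Prop) : Prop :=
  match k with
  | O => forall u v, D u v -> continuous (fun p : R * R => h (fst p) (snd p)) (u, v)
  | S k' => (forall u v, D u v -> continuous (fun p : R * R => h (fst p) (snd p)) (u, v))
            /\ (forall u v, D u v -> ex_derive (fun t => h t v) u /\ ex_derive (fun t => h u t) v)
            /\ Ck k' (pu h) D /\ Ck k' (pv h) D
  end.
Definition smooth (h : R -> R -> R) (D : R -> R -> Prop) : Prop := forall k, Ck k h D.

Definition surface := R -> R -> vec3.
Definition sx (s : surface) : R -> R -> R := fun u v => v1 (s u v).
Definition sy (s : surface) : R -> R -> R := fun u v => v2 (s u v).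
Definition sz (s : surface) : R -> R -> R := fun u v => v3 (s u v).
Definition Su (s : surface) : surface := fun u v => (pu (sx s) u v, pu (sy s) u v, pu (sz s) u v).
Definition Sv (s : surface) : surface := fun u v => (pv (sx s) u v, pv (sy s) u v, pv (sz s) u v).

Definition regular_surface (s : surface) (D : R -> R -> Prop) : Prop :=
  open2 D /\ smooth (sx s) D /\ smooth (sy s) D /\ smooth (sz s) D /\
  (forall u v, D u v -> cross (Su s u v) (Sv s u v) <> (0, 0, 0)).

Definition fE (s : surface) : R -> R -> R := fun u v => dot (Su s u v) (Su s u v).
Definition fF (s : surface) : R -> R -> R := fun u v => dot (Su s u v) (Sv s u v).
Definition fG (s : surface) : R -> R -> R := fun u v => dot (Sv s u v) (Sv s u v).
Definition unormal (s : surface) (u v : R) : vec3 :=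
  let c := cross (Su s u v) (Sv s u v) in vscale (/ vnorm c) c.
Definition fL (s : surface) : R -> R -> R := fun u v => dot (Su (Su s) u v) (unormal s u v).
Definition fM (s : surface) : R -> R -> R := fun u v => dot (Sv (Su s) u v) (unormal s u v).
Definition fN (s : surface) : R -> R -> R := fun u v => dot (Sv (Sv s) u v) (unormal s u v).

Definition nu1 (s : surface) : R -> R -> R := fun u v => fL s u v / fE s u v.
Definition nu2 (s : surface) : R -> R -> R := fun u v => fN s u v / fG s u v.
Definition gam1 (s : surface) : R -> R -> R :=
  fun u v => - pv (fE s) u v / (2 * fE s u v * sqrt (fG s u v)).
Definition gam2 (s : surface) : R -> R -> R :=
  fun u v => pu (fG s) u v / (2 * fG s u v * sqrt (fE s u v)).

(** (u,v) are principal parameters (F = M = 0) on D, without umbilical points,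
    and the surface is strongly regular, with the convention nu1 - nu2 > 0. *)
Definition strongly_regular_principal (s : surface) (D : R -> R -> Prop) : Prop :=
  regular_surface s D /\
  (forall u v, D u v -> fF s u v = 0 /\ fM s u v = 0) /\
  (forall u v, D u v -> nu1 s u v - nu2 s u v > 0 /\
                        (nu1 s u v - nu2 s u v) * gam1 s u v * gam2 s u v <> 0).

Definition open_interval (I : R -> Prop) : Prop :=
  open I /\ (forall a b c, I a -> I c -> a <= b <= c -> I b).

Definition weingarten_data (s : surface) (D : R -> R -> Prop)
    (I : R -> Prop) (f g : R -> R) (nu : R -> R -> R) : Prop :=
  open_interval I /\
  (forall t, I t -> ex_derive f t /\ ex_derive g t /\ f t - g t > 0 /\
                    Derive f t * Derive g t <> 0) /\
  (forall u v, D u v -> I (nu u v) /\ differentiable_pt nu u v /\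
                        pu nu u v * pv nu u v <> 0 /\
                        nu1 s u v = f (nu u v) /\ nu2 s u v = g (nu u v)).

Definition strongly_regular_weingarten (s : surface) (D : R -> R -> Prop) : Prop :=
  strongly_regular_principal s D /\ exists I f g nu, weingarten_data s D I f g nu.

(** lambda and mu, given antiderivatives Phi of f'/(f-g) and Psi of g'/(g-f) *)
Definition lam (s : surface) (Phi : R -> R) (nu : R -> R -> R) : R -> R -> R :=
  fun u v => ln (sqrt (fE s u v)) + Phi (nu u v).
Definition mu (s : surface) (Psi : R -> R) (nu : R -> R -> R) : R -> R -> R :=
  fun u v => ln (sqrt (fG s u v)) + Psi (nu u v).

Definition geometric_principal (s : surface) (D : R -> R -> Prop) : Prop :=
  strongly_regular_principal s D /\
  exists I f g nu Phi Psi,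
    weingarten_data s D I f g nu /\
    (forall t, I t -> is_derive Phi t (Derive f t / (f t - g t))) /\
    (forall t, I t -> is_derive Psi t (Derive g t / (g t - f t))) /\
    exists c1 c2, forall u v, D u v -> lam s Phi nu u v = c1 /\ mu s Psi nu u v = c2.

Definition diffeo (theta eta : R -> R -> R * R) (W V : R -> R -> Prop) : Prop :=
  open2 W /\ open2 V /\
  smooth (fun a b => fst (theta a b)) W /\ smooth (fun a b => snd (theta a b)) W /\
  smooth (fun u v => fst (eta u v)) V /\ smooth (fun u v => snd (eta u v)) V /\
  (forall a b, W a b -> V (fst (theta a b)) (snd (theta a b)) /\
                        eta (fst (theta a b)) (snd (theta a b)) = (a, b)) /\
  (forall u v, V u v -> W (fst (eta u v)) (snd (eta u v)) /\
                        theta (fst (eta u v)) (snd (eta u v)) = (u, v)).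

Definition reparam (s : surface) (theta : R -> R -> R * R) : surface :=
  fun a b => s (fst (theta a b)) (snd (theta a b)).

(* Main.v *)
Require Import Defs.
From Stdlib Require Import Reals.
From Coquelicot Require Import Coquelicot.
From Stdlib Require Import Lra Psatz ClassicalEpsilon Ranalysis5.
Open Scope R_scope.

Lemma open2_loc : forall D u v, open2 D -> D u v -> locally_2d D u v.
Proof.
  intros D u v HD Huv. apply locally_2d_locally. apply HD. exact Huv.
Qed.

Lemma open2_loc_u : forall D u v, open2 D -> D u v -> locally u (fun t => D t v).
Proof. intros. apply locally_2d_1d_const_y. apply open2_loc; auto. Qed.
Lemma open2_loc_v : forall D u v, open2 D -> D u v -> locally v (fun t => D u t).
Proof. intros. apply locally_2d_1d_const_x. apply open2_loc; auto. Qed.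

Lemma pu_ext : forall (D : R -> R -> Prop) (f g : R -> R -> R) u v, open2 D -> (forall a b, D a b -> f a b = g a b) ->
  D u v -> pu f u v = pu g u v.
Proof.
  intros D f g u v HD Hfg Huv. unfold pu. apply Derive_ext_loc.
  generalize (open2_loc_u D u v HD Huv). apply filter_imp. intros t Ht; auto.
Qed.
Lemma pv_ext : forall (D : R -> R -> Prop) (f g : R -> R -> R) u v, open2 D -> (forall a b, D a b -> f a b = g a b) ->
  D u v -> pv f u v = pv g u v.
Proof.
  intros D f g u v HD Hfg Huv. unfold pv. apply Derive_ext_loc.
  generalize (open2_loc_v D u v HD Huv). apply filter_imp. intros t Ht; auto.
Qed.

Lemma cont2_ext : forall (D : R -> R -> Prop) (f g : R -> R -> R) u v, open2 D -> (forall a b, D a b -> f a b = g a b) ->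
  D u v -> continuous (fun p : R * R => f (fst p) (snd p)) (u, v) ->
  continuous (fun p : R * R => g (fst p) (snd p)) (u, v).
Proof.
  intros D f g u v HD Hfg Huv Hc.
  apply continuous_ext_loc with (fun p : R * R => f (fst p) (snd p)).
  - generalize (HD (u,v) Huv). apply filter_imp. intros [a b] H. simpl. auto.
  - exact Hc.
Qed.

Lemma exu_ext : forall (D : R -> R -> Prop) (f g : R -> R -> R) u v, open2 D -> (forall a b, D a b -> f a b = g a b) ->
  D u v -> ex_derive (fun t => f t v) u -> ex_derive (fun t => g t v) u.
Proof.
  intros D f g u v HD Hfg Huv [l Hl]. exists l.
  apply is_derive_ext_loc with (fun t => f t v); auto.
  generalize (open2_loc_u D u v HD Huv). apply filter_imp. intros t Ht; auto.
Qed.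
Lemma exv_ext : forall (D : R -> R -> Prop) (f g : R -> R -> R) u v, open2 D -> (forall a b, D a b -> f a b = g a b) ->
  D u v -> ex_derive (fun t => f u t) v -> ex_derive (fun t => g u t) v.
Proof.
  intros D f g u v HD Hfg Huv [l Hl]. exists l.
  apply is_derive_ext_loc with (fun t => f u t); auto.
  generalize (open2_loc_v D u v HD Huv). apply filter_imp. intros t Ht; auto.
Qed.

Lemma Ck_cont : forall k (h : R -> R -> R) D u v, Ck k h D -> D u v ->
  continuous (fun p : R * R => h (fst p) (snd p)) (u, v).
Proof. intros [|k] h D u v H Huv; simpl in H. apply H; auto. apply H; auto. Qed.

Lemma Ck_S : forall k (h : R -> R -> R) D, Ck (S k) h D -> Ck k h D.
Proof.
  induction k; intros h D H.
  - simpl in *. apply H.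
  - destruct H as [H1 [H2 [H3 H4]]]. split; [exact H1|]. split; [exact H2|].
    split; apply IHk; assumption.
Qed.

Lemma Ck_le : forall k m (h : R -> R -> R) D, (m <= k)%nat -> Ck k h D -> Ck m h D.
Proof.
  intros k m h D Hle. induction Hle; auto. intros H. apply IHHle. apply Ck_S. exact H.
Qed.

Lemma Ck_ext : forall k (D : R -> R -> Prop) (f g : R -> R -> R), open2 D -> (forall a b, D a b -> f a b = g a b) ->
  Ck k f D -> Ck k g D.
Proof.
  induction k; intros D f g HD Hfg H.
  - simpl in *. intros u v Huv. apply cont2_ext with D f; auto.
  - destruct H as [H1 [H2 [H3 H4]]]. split; [|split; [|split]].
    + intros u v Huv. apply cont2_ext with D f; auto.
    + intros u v Huv. destruct (H2 u v Huv). split.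
      apply exu_ext with D f; auto. apply exv_ext with D f; auto.
    + apply IHk with (pu f); auto. intros; apply pu_ext with D; auto.
    + apply IHk with (pv f); auto. intros; apply pv_ext with D; auto.
Qed.

Lemma Ck_pu : forall k (h : R -> R -> R) D, Ck (S k) h D -> Ck k (pu h) D.
Proof. intros k h D H. apply H. Qed.
Lemma Ck_pv : forall k (h : R -> R -> R) D, Ck (S k) h D -> Ck k (pv h) D.
Proof. intros k h D H. apply H. Qed.
Lemma Ck_exu : forall k (h : R -> R -> R) D u v, Ck (S k) h D -> D u v -> ex_derive (fun t => h t v) u.
Proof. intros k h D u v H Huv. exact (proj1 (proj1 (proj2 H) u v Huv)). Qed.
Lemma Ck_exv : forall k (h : R -> R -> R) D u v, Ck (S k) h D -> D u v -> ex_derive (fun t => h u t) v.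
Proof. intros k h D u v H Huv. exact (proj2 (proj1 (proj2 H) u v Huv)). Qed.


From Stdlib Require Import FunctionalExtensionality.

Lemma Ck_const : forall k c D, Ck k (fun _ _ => c) D.
Proof.
  induction k; intros c D.
  - intros u v _. apply continuous_const.
  - assert (E1 : pu (fun _ _ => c) = fun _ _ => 0).
    { extensionality a; extensionality b. unfold pu. apply Derive_const. }
    assert (E2 : pv (fun _ _ => c) = fun _ _ => 0).
    { extensionality a; extensionality b. unfold pv. apply Derive_const. }
    split; [|split; [|split]].
    + intros u v _. apply continuous_const.
    + intros u v _. split; apply ex_derive_const.
    + rewrite E1. apply IHk.
    + rewrite E2. apply IHk.
Qed.


Lemma exd_cont : forall (f : R -> R) x, ex_derive f x -> continuous f x.
Proof. intros f x H. exact (ex_derive_continuous f x H). Qed.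

Lemma exd_plus : forall (f g : R -> R) x, ex_derive f x -> ex_derive g x -> ex_derive (fun t => f t + g t) x.
Proof. intros f g x H1 H2. exact (ex_derive_plus f g x H1 H2). Qed.
Lemma exd_mult : forall (f g : R -> R) x, ex_derive f x -> ex_derive g x -> ex_derive (fun t => f t * g t) x.
Proof. intros f g x H1 H2. exact (ex_derive_mult f g x H1 H2). Qed.
Lemma exd_opp : forall (f : R -> R) x, ex_derive f x -> ex_derive (fun t => - f t) x.
Proof. intros f x H1. exact (ex_derive_opp f x H1). Qed.
Lemma Ck_plus : forall k (D : R -> R -> Prop) (p q : R -> R -> R), open2 D ->
  Ck k p D -> Ck k q D -> Ck k (fun u v => p u v + q u v) D.
Proof.
  induction k; intros D p q HD Hp Hq.
  - intros u v Huv. apply (continuous_plus (fun z : R * R => p (fst z) (snd z))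
      (fun z : R * R => q (fst z) (snd z))); [apply Hp|apply Hq]; auto.
  - split; [|split; [|split]].
    + intros u v Huv. apply (continuous_plus (fun z : R * R => p (fst z) (snd z))
      (fun z : R * R => q (fst z) (snd z))); [apply Hp|apply Hq]; auto.
    + intros u v Huv. destruct (proj1 (proj2 Hp) u v Huv), (proj1 (proj2 Hq) u v Huv).
      split; apply exd_plus; auto.
    + apply Ck_ext with (fun u v => pu p u v + pu q u v); [exact HD| |].
      * intros a b Hab. unfold pu. rewrite Derive_plus. reflexivity.
        apply (Ck_exu k p D a b Hp Hab). apply (Ck_exu k q D a b Hq Hab).
      * apply IHk; [exact HD|apply Hp|apply Hq].
    + apply Ck_ext with (fun u v => pv p u v + pv q u v); [exact HD| |].
      * intros a b Hab. unfold pv. rewrite Derive_plus. reflexivity.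
        apply (Ck_exv k p D a b Hp Hab). apply (Ck_exv k q D a b Hq Hab).
      * apply IHk; [exact HD|apply Hp|apply Hq].
Qed.

Lemma Ck_opp : forall k (D : R -> R -> Prop) (p : R -> R -> R), open2 D ->
  Ck k p D -> Ck k (fun u v => - p u v) D.
Proof.
  induction k; intros D p HD Hp.
  - intros u v Huv. apply (continuous_opp (fun z : R * R => p (fst z) (snd z))). exact (Ck_cont _ _ _ _ _ Hp Huv).
  - split; [|split; [|split]].
    + intros u v Huv. apply (continuous_opp (fun z : R * R => p (fst z) (snd z))). exact (Ck_cont _ _ _ _ _ Hp Huv).
    + intros u v Huv. split; apply exd_opp; [exact (Ck_exu _ _ _ _ _ Hp Huv)|exact (Ck_exv _ _ _ _ _ Hp Huv)].
    + apply Ck_ext with (fun u v => - pu p u v); [exact HD| |].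
      * intros a b Hab. unfold pu. rewrite Derive_opp. reflexivity.
      * apply IHk; [exact HD|apply Hp].
    + apply Ck_ext with (fun u v => - pv p u v); [exact HD| |].
      * intros a b Hab. unfold pv. rewrite Derive_opp. reflexivity.
      * apply IHk; [exact HD|apply Hp].
Qed.

Lemma Ck_mult : forall k (D : R -> R -> Prop) (p q : R -> R -> R), open2 D ->
  Ck k p D -> Ck k q D -> Ck k (fun u v => p u v * q u v) D.
Proof.
  induction k; intros D p q HD Hp Hq.
  - intros u v Huv. apply (continuous_mult (fun z : R * R => p (fst z) (snd z))
      (fun z : R * R => q (fst z) (snd z))); [exact (Ck_cont _ _ _ _ _ Hp Huv)|exact (Ck_cont _ _ _ _ _ Hq Huv)].
  - split; [|split; [|split]].
    + intros u v Huv. apply (continuous_mult (fun z : R * R => p (fst z) (snd z))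
      (fun z : R * R => q (fst z) (snd z))); [exact (Ck_cont _ _ _ _ _ Hp Huv)|exact (Ck_cont _ _ _ _ _ Hq Huv)].
    + intros u v Huv. split; apply exd_mult.
      exact (Ck_exu _ _ _ _ _ Hp Huv). exact (Ck_exu _ _ _ _ _ Hq Huv).
      exact (Ck_exv _ _ _ _ _ Hp Huv). exact (Ck_exv _ _ _ _ _ Hq Huv).
    + apply Ck_ext with (fun u v => pu p u v * q u v + p u v * pu q u v); [exact HD| |].
      * intros a b Hab. unfold pu. rewrite Derive_mult. reflexivity.
        exact (Ck_exu _ _ _ _ _ Hp Hab). exact (Ck_exu _ _ _ _ _ Hq Hab).
      * apply Ck_plus; [exact HD| |]; apply IHk; try exact HD.
        apply Hp. apply Ck_S, Hq. apply Ck_S, Hp. apply Hq.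
    + apply Ck_ext with (fun u v => pv p u v * q u v + p u v * pv q u v); [exact HD| |].
      * intros a b Hab. unfold pv. rewrite Derive_mult. reflexivity.
        exact (Ck_exv _ _ _ _ _ Hp Hab). exact (Ck_exv _ _ _ _ _ Hq Hab).
      * apply Ck_plus; [exact HD| |]; apply IHk; try exact HD.
        apply Hp. apply Ck_S, Hq. apply Ck_S, Hp. apply Hq.
Qed.

Lemma Ck_post : forall (F F' : R -> R) (S : R -> Prop),
  (forall y, S y -> is_derive F y (F' y)) ->
  (forall k (h : R -> R -> R) D, open2 D -> (forall u v, D u v -> S (h u v)) -> Ck k h D ->
       Ck k (fun u v => F (h u v)) D -> Ck k (fun u v => F' (h u v)) D) ->
  forall k (h : R -> R -> R) D, open2 D -> (forall u v, D u v -> S (h u v)) -> Ck k h D ->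
    Ck k (fun u v => F (h u v)) D.
Proof.
  intros F F' S HF HF' k. induction k; intros h D HD HS Hh.
  - intros u v Huv.
    apply (continuous_comp (fun z : R * R => h (fst z) (snd z)) F).
    apply Hh; exact Huv. apply exd_cont. exists (F' (h u v)). apply HF, HS, Huv.
  - assert (Hc : forall u v, D u v -> continuous (fun p : R * R => F (h (fst p) (snd p))) (u, v)).
    { intros u v Huv.
      apply (continuous_comp (fun z : R * R => h (fst z) (snd z)) F).
      apply (Ck_cont _ _ _ _ _ Hh Huv). apply exd_cont. exists (F' (h u v)). apply HF, HS, Huv. }
    assert (IH1 : Ck k (fun u v => F (h u v)) D).
    { apply IHk; [exact HD|exact HS|apply Ck_S; exact Hh]. }
    split; [exact Hc|split;[|split]].
    + intros u v Huv. split.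
      * apply (ex_derive_comp F (fun t => h t v)). exists (F' (h u v)). apply HF, HS, Huv.
        exact (Ck_exu _ _ _ _ _ Hh Huv).
      * apply (ex_derive_comp F (fun t => h u t)). exists (F' (h u v)). apply HF, HS, Huv.
        exact (Ck_exv _ _ _ _ _ Hh Huv).
    + apply Ck_ext with (fun u v => pu h u v * F' (h u v)); [exact HD| |].
      * intros a b Hab. unfold pu. rewrite (Derive_comp F (fun t => h t b)).
        f_equal. symmetry. apply is_derive_unique. apply HF, HS, Hab.
        exists (F' (h a b)). apply HF, HS, Hab. exact (Ck_exu _ _ _ _ _ Hh Hab).
      * apply Ck_mult; [exact HD|apply Ck_pu; exact Hh|].
        apply HF'; [exact HD|exact HS|apply Ck_S; exact Hh|exact IH1].
    + apply Ck_ext with (fun u v => pv h u v * F' (h u v)); [exact HD| |].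
      * intros a b Hab. unfold pv. rewrite (Derive_comp F (fun t => h a t)).
        f_equal. symmetry. apply is_derive_unique. apply HF, HS, Hab.
        exists (F' (h a b)). apply HF, HS, Hab. exact (Ck_exv _ _ _ _ _ Hh Hab).
      * apply Ck_mult; [exact HD|apply Ck_pv; exact Hh|].
        apply HF'; [exact HD|exact HS|apply Ck_S; exact Hh|exact IH1].
Qed.

Lemma Ck_inv : forall k (h : R -> R -> R) D, open2 D -> (forall u v, D u v -> h u v <> 0) ->
  Ck k h D -> Ck k (fun u v => / h u v) D.
Proof.
  apply (Ck_post (fun y => / y) (fun y => - (/ y * / y)) (fun y => y <> 0)).
  - intros y Hy. 
    assert (H := is_derive_inv (fun t => t) y 1 (is_derive_id y) Hy).
    replace (- (/ y * / y)) with (- 1 / y ^ 2). exact H. field. exact Hy.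
  - intros k h D HD HS Hh HFh. apply Ck_opp; [exact HD|]. apply Ck_mult; assumption.
Qed.

Lemma Ck_exp : forall k (h : R -> R -> R) D, open2 D ->
  Ck k h D -> Ck k (fun u v => exp (h u v)) D.
Proof.
  intros k h D HD Hh.
  apply (Ck_post exp exp (fun _ => True)); auto.
  - intros y _. apply is_derive_exp.
Qed.

Lemma Ck_sqrt : forall k (h : R -> R -> R) D, open2 D -> (forall u v, D u v -> 0 < h u v) ->
  Ck k h D -> Ck k (fun u v => sqrt (h u v)) D.
Proof.
  apply (Ck_post sqrt (fun y => / 2 * / sqrt y) (fun y => 0 < y)).
  - intros y Hy.
    assert (H := is_derive_sqrt (fun t => t) y 1 (is_derive_id y) Hy).
    replace (/ 2 * / sqrt y) with (1 / (2 * sqrt y)). exact H. field.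
    apply Rgt_not_eq, sqrt_lt_R0, Hy.
  - intros k h D HD HS Hh HFh. apply Ck_mult; [exact HD|apply Ck_const|].
    apply Ck_inv; [exact HD| |exact HFh]. intros u v Huv. apply Rgt_not_eq, sqrt_lt_R0, HS, Huv.
Qed.

Lemma Ck_ln : forall k (h : R -> R -> R) D, open2 D -> (forall u v, D u v -> 0 < h u v) ->
  Ck k h D -> Ck k (fun u v => ln (h u v)) D.
Proof.
  intros k h D HD HS Hh.
  apply (Ck_post ln (fun y => / y) (fun y => 0 < y)); auto.
  - intros y Hy. apply is_derive_ln, Hy.
  - intros k' h' D' HD' HS' Hh' _. apply Ck_inv; auto.
    intros u v Huv. apply Rgt_not_eq, HS', Huv.
Qed.

Lemma Ck_comp : forall k (h : R -> R -> R) (V W : R -> R -> Prop) (al be : R -> R),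
  open2 W -> (forall a b, W a b -> V (al a) (be b)) -> Ck k h V ->
  Ck k (fun a b => al a) W -> Ck k (fun a b => be b) W ->
  Ck k (fun a b => h (al a) (be b)) W.
Proof.
  induction k; intros h V W al be HW HWV Hh Ha Hb.
  - intros a b Hab.
    apply (continuous_comp_2 (fun p : R * R => al (fst p)) (fun p : R * R => be (snd p)) h (a, b)).
    exact (Ck_cont _ _ _ _ _ Ha Hab). exact (Ck_cont _ _ _ _ _ Hb Hab).
    exact (Ck_cont _ _ _ _ _ Hh (HWV a b Hab)).
  - split; [|split; [|split]].
    + intros a b Hab.
      apply (continuous_comp_2 (fun p : R * R => al (fst p)) (fun p : R * R => be (snd p)) h (a, b)).
      exact (Ck_cont _ _ _ _ _ Ha Hab). exact (Ck_cont _ _ _ _ _ Hb Hab).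
      exact (Ck_cont _ _ _ _ _ Hh (HWV a b Hab)).
    + intros a b Hab. split.
      * apply (ex_derive_comp (fun t => h t (be b)) al).
        exact (Ck_exu _ _ _ _ _ Hh (HWV a b Hab)). exact (Ck_exu _ _ _ _ _ Ha Hab).
      * apply (ex_derive_comp (fun t => h (al a) t) be).
        exact (Ck_exv _ _ _ _ _ Hh (HWV a b Hab)). exact (Ck_exv _ _ _ _ _ Hb Hab).
    + apply Ck_ext with (fun a b => pu (fun a b => al a) a b * pu h (al a) (be b)); [exact HW| |].
      * intros a b Hab. unfold pu. rewrite (Derive_comp (fun t => h t (be b)) al). reflexivity.
        exact (Ck_exu _ _ _ _ _ Hh (HWV a b Hab)). exact (Ck_exu _ _ _ _ _ Ha Hab).
      * apply Ck_mult; [exact HW|apply Ck_pu, Ha|].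
        apply (IHk (pu h) V W al be HW HWV (Ck_pu _ _ _ Hh) (Ck_S _ _ _ Ha) (Ck_S _ _ _ Hb)).
    + apply Ck_ext with (fun a b => pv (fun a b => be b) a b * pv h (al a) (be b)); [exact HW| |].
      * intros a b Hab. unfold pv. rewrite (Derive_comp (fun t => h (al a) t) be). reflexivity.
        exact (Ck_exv _ _ _ _ _ Hh (HWV a b Hab)). exact (Ck_exv _ _ _ _ _ Hb Hab).
      * apply Ck_mult; [exact HW|apply Ck_pv, Hb|].
        apply (IHk (pv h) V W al be HW HWV (Ck_pv _ _ _ Hh) (Ck_S _ _ _ Ha) (Ck_S _ _ _ Hb)).
Qed.

Lemma smooth_comp : forall (h : R -> R -> R) (V W : R -> R -> Prop) (al be : R -> R),
  open2 W -> (forall a b, W a b -> V (al a) (be b)) -> smooth h V ->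
  smooth (fun a b => al a) W -> smooth (fun a b => be b) W ->
  smooth (fun a b => h (al a) (be b)) W.
Proof. intros h V W al be HW HWV Hh Ha Hb k. apply Ck_comp with V; auto. Qed.

Lemma smooth_plus : forall D (p q : R -> R -> R), open2 D -> smooth p D -> smooth q D ->
  smooth (fun u v => p u v + q u v) D.
Proof. intros D p q HD Hp Hq k. apply Ck_plus; auto. Qed.
Lemma smooth_mult : forall D (p q : R -> R -> R), open2 D -> smooth p D -> smooth q D ->
  smooth (fun u v => p u v * q u v) D.
Proof. intros D p q HD Hp Hq k. apply Ck_mult; auto. Qed.
Lemma smooth_opp : forall D (p : R -> R -> R), open2 D -> smooth p D ->
  smooth (fun u v => - p u v) D.
Proof. intros D p HD Hp k. apply Ck_opp; auto. Qed.
Lemma smooth_minus : forall D (p q : R -> R -> R), open2 D -> smooth p D -> smooth q D ->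
  smooth (fun u v => p u v - q u v) D.
Proof. intros D p q HD Hp Hq. unfold Rminus. apply smooth_plus; auto. apply smooth_opp; auto. Qed.
Lemma smooth_const : forall D c, smooth (fun _ _ => c) D.
Proof. intros D c k. apply Ck_const. Qed.
Lemma smooth_inv : forall D (p : R -> R -> R), open2 D -> (forall u v, D u v -> p u v <> 0) -> smooth p D ->
  smooth (fun u v => / p u v) D.
Proof. intros D p HD H Hp k. apply Ck_inv; auto. Qed.
Lemma smooth_div : forall D (p q : R -> R -> R), open2 D -> (forall u v, D u v -> q u v <> 0) ->
  smooth p D -> smooth q D -> smooth (fun u v => p u v / q u v) D.
Proof. intros D p q HD H Hp Hq. unfold Rdiv. apply smooth_mult; auto. apply smooth_inv; auto. Qed.
Lemma smooth_sqrt : forall D (p : R -> R -> R), open2 D -> (forall u v, D u v -> 0 < p u v) -> smooth p D ->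
  smooth (fun u v => sqrt (p u v)) D.
Proof. intros D p HD H Hp k. apply Ck_sqrt; auto. Qed.
Lemma smooth_exp : forall D (p : R -> R -> R), open2 D -> smooth p D ->
  smooth (fun u v => exp (p u v)) D.
Proof. intros D p HD Hp k. apply Ck_exp; auto. Qed.
Lemma smooth_ln : forall D (p : R -> R -> R), open2 D -> (forall u v, D u v -> 0 < p u v) -> smooth p D ->
  smooth (fun u v => ln (p u v)) D.
Proof. intros D p HD H Hp k. apply Ck_ln; auto. Qed.
Lemma smooth_pu : forall D (p : R -> R -> R), smooth p D -> smooth (pu p) D.
Proof. intros D p Hp k. apply Ck_pu, Hp. Qed.
Lemma smooth_pv : forall D (p : R -> R -> R), smooth p D -> smooth (pv p) D.
Proof. intros D p Hp k. apply Ck_pv, Hp. Qed.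
Lemma smooth_ext : forall D (f g : R -> R -> R), open2 D -> (forall a b, D a b -> f a b = g a b) ->
  smooth f D -> smooth g D.
Proof. intros D f g HD H Hf k. apply Ck_ext with f; auto. Qed.
Lemma smooth_exu : forall (h : R -> R -> R) D u v, smooth h D -> D u v -> ex_derive (fun t => h t v) u.
Proof. intros h D u v H Huv. exact (Ck_exu 0 h D u v (H 1%nat) Huv). Qed.
Lemma smooth_exv : forall (h : R -> R -> R) D u v, smooth h D -> D u v -> ex_derive (fun t => h u t) v.
Proof. intros h D u v H Huv. exact (Ck_exv 0 h D u v (H 1%nat) Huv). Qed.
Lemma smooth_cont : forall (h : R -> R -> R) D u v, smooth h D -> D u v ->
  continuous (fun p : R * R => h (fst p) (snd p)) (u, v).
Proof. intros h D u v H Huv. exact (Ck_cont 0 h D u v (H 0%nat) Huv). Qed.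
Lemma smooth_sub : forall (h : R -> R -> R) (D D' : R -> R -> Prop), (forall u v, D' u v -> D u v) ->
  smooth h D -> smooth h D'.
Proof.
  intros h D D' Hsub H k. generalize (H k). clear H. revert h. induction k; intros h H.
  - intros u v Huv. apply H, Hsub, Huv.
  - destruct H as [H1 [H2 [H3 H4]]]. split; [|split;[|split]].
    intros u v Huv; apply H1, Hsub, Huv. intros u v Huv; apply H2, Hsub, Huv.
    apply IHk, H3. apply IHk, H4.
Qed.

Lemma dot_pos : forall a : vec3, a <> (0,0,0) -> 0 < dot a a.
Proof.
  intros [[a1 a2] a3] H. unfold dot, v1, v2, v3; simpl.
  destruct (Req_dec a1 0); destruct (Req_dec a2 0); destruct (Req_dec a3 0); subst;
  try (exfalso; apply H; reflexivity); nra.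
Qed.

Definition cc (x : surface) u v := cross (Su x u v) (Sv x u v).
Definition N1 (x : surface) u v := v1 (unormal x u v).
Definition N2 (x : surface) u v := v2 (unormal x u v).
Definition N3 (x : surface) u v := v3 (unormal x u v).

Section Geo.
Variable x : surface.
Variable D : R -> R -> Prop.
Hypothesis Hreg : regular_surface x D.

Let HD : open2 D. Proof. apply Hreg. Qed.
Let Hx1 : smooth (sx x) D. Proof. apply Hreg. Qed.
Let Hx2 : smooth (sy x) D. Proof. apply Hreg. Qed.
Let Hx3 : smooth (sz x) D. Proof. apply Hreg. Qed.

Lemma sm_c1 : smooth (fun u v => v1 (cc x u v)) D.
Proof.
  apply smooth_ext with (fun u v => pu (sy x) u v * pv (sz x) u v - pu (sz x) u v * pv (sy x) u v); auto.
  apply smooth_minus; auto; apply smooth_mult; auto; first [apply smooth_pu|apply smooth_pv]; auto.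
Qed.
Lemma sm_c2 : smooth (fun u v => v2 (cc x u v)) D.
Proof.
  apply smooth_ext with (fun u v => pu (sz x) u v * pv (sx x) u v - pu (sx x) u v * pv (sz x) u v); auto.
  apply smooth_minus; auto; apply smooth_mult; auto; first [apply smooth_pu|apply smooth_pv]; auto.
Qed.
Lemma sm_c3 : smooth (fun u v => v3 (cc x u v)) D.
Proof.
  apply smooth_ext with (fun u v => pu (sx x) u v * pv (sy x) u v - pu (sy x) u v * pv (sx x) u v); auto.
  apply smooth_minus; auto; apply smooth_mult; auto; first [apply smooth_pu|apply smooth_pv]; auto.
Qed.

Lemma cc_pos : forall u v, D u v -> 0 < dot (cc x u v) (cc x u v).
Proof. intros u v Huv. apply dot_pos. apply Hreg, Huv. Qed.

Lemma sm_ninv : smooth (fun u v => / vnorm (cc x u v)) D.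
Proof.
  apply smooth_inv; auto.
  - intros u v Huv. apply Rgt_not_eq. apply sqrt_lt_R0, cc_pos, Huv.
  - unfold vnorm. apply smooth_sqrt; auto. apply cc_pos.
    unfold dot. apply smooth_plus; auto; [apply smooth_plus; auto|];
    apply smooth_mult; auto; first [apply sm_c1|apply sm_c2|apply sm_c3].
Qed.

Lemma sm_N1 : smooth (N1 x) D.
Proof. apply smooth_mult; auto. apply sm_ninv. apply sm_c1. Qed.
Lemma sm_N2 : smooth (N2 x) D.
Proof. apply smooth_mult; auto. apply sm_ninv. apply sm_c2. Qed.
Lemma sm_N3 : smooth (N3 x) D.
Proof. apply smooth_mult; auto. apply sm_ninv. apply sm_c3. Qed.

End Geo.

Lemma cont_2d : forall (h : R -> R -> R) u v,
  continuous (fun p : R * R => h (fst p) (snd p)) (u, v) -> continuity_2d_pt h u v.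
Proof. intros h u v H. apply continuity_2d_pt_filterlim. exact H. Qed.

Lemma schwarz_sm : forall (h : R -> R -> R) D u v, open2 D -> smooth h D -> D u v ->
  pu (pv h) u v = pv (pu h) u v.
Proof.
  intros h D u v HD Hh Huv. unfold pu, pv.
  apply Schwarz.
  - generalize (open2_loc D u v HD Huv). apply locally_2d_impl. apply locally_2d_forall.
    intros a b Hab. split; [|split;[|split]].
    + exact (smooth_exu h D a b Hh Hab).
    + exact (smooth_exv h D a b Hh Hab).
    + exact (smooth_exu (pv h) D a b (smooth_pv D h Hh) Hab).
    + exact (smooth_exv (pu h) D a b (smooth_pu D h Hh) Hab).
  - apply cont_2d. exact (smooth_cont (pu (pv h)) D u v (smooth_pu D _ (smooth_pv D h Hh)) Huv).
  - apply cont_2d. exact (smooth_cont (pv (pu h)) D u v (smooth_pv D _ (smooth_pu D h Hh)) Huv).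
Qed.
Lemma gram : forall a b w z : vec3,
  dot (cross a b) w * dot (cross a b) z =
  dot w z * (dot a a * dot b b - dot a b * dot a b) - dot b b * dot w a * dot z a
  - dot a a * dot w b * dot z b + dot a b * (dot w a * dot z b + dot w b * dot z a).
Proof.
  intros [[a1 a2] a3] [[b1 b2] b3] [[w1 w2] w3] [[z1 z2] z3].
  unfold dot, cross, v1, v2, v3; simpl. ring.
Qed.
Lemma lagrange : forall a b : vec3, dot (cross a b) (cross a b) = dot a a * dot b b - dot a b * dot a b.
Proof.
  intros [[a1 a2] a3] [[b1 b2] b3]. unfold dot, cross, v1, v2, v3; simpl. ring.
Qed.
Lemma dot_scal_l : forall s a w, dot (vscale s a) w = s * dot a w.
Proof. intros s [[a1 a2] a3] [[w1 w2] w3]. unfold dot, vscale, v1, v2, v3; simpl. ring. Qed.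
Lemma parseval : forall (a b w z : vec3) s,
  dot a b = 0 -> s * s * dot (cross a b) (cross a b) = 1 ->
  dot a a * dot b b * dot w z = dot b b * dot w a * dot z a + dot a a * dot w b * dot z b +
    dot a a * dot b b * (dot (vscale s (cross a b)) w * dot (vscale s (cross a b)) z).
Proof.
  intros a b w z s Hab Hs. rewrite !dot_scal_l.
  rewrite lagrange, Hab in Hs.
  replace (dot a a * dot b b * (s * dot (cross a b) w * (s * dot (cross a b) z)))
    with ((s * s * (dot a a * dot b b - 0 * 0)) * (dot (cross a b) w * dot (cross a b) z)) by ring.
  rewrite Hs, gram, Hab. ring.
Qed.

Definition sm3 (V : surface) D :=
  smooth (fun u v => v1 (V u v)) D /\ smooth (fun u v => v2 (V u v)) D /\ smooth (fun u v => v3 (V u v)) D.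

Lemma sm3_Su : forall V D, sm3 V D -> sm3 (Su V) D.
Proof. intros V D [H1 [H2 H3]]. split; [|split]; apply smooth_pu; assumption. Qed.
Lemma sm3_Sv : forall V D, sm3 V D -> sm3 (Sv V) D.
Proof. intros V D [H1 [H2 H3]]. split; [|split]; apply smooth_pv; assumption. Qed.

Lemma pu_mult : forall D (p q : R -> R -> R) u v, smooth p D -> smooth q D -> D u v ->
  pu (fun a b => p a b * q a b) u v = pu p u v * q u v + p u v * pu q u v.
Proof.
  intros D p q u v Hp Hq Huv. unfold pu. rewrite Derive_mult. reflexivity.
  exact (smooth_exu p D u v Hp Huv). exact (smooth_exu q D u v Hq Huv).
Qed.
Lemma pv_mult : forall D (p q : R -> R -> R) u v, smooth p D -> smooth q D -> D u v ->
  pv (fun a b => p a b * q a b) u v = pv p u v * q u v + p u v * pv q u v.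
Proof.
  intros D p q u v Hp Hq Huv. unfold pv. rewrite Derive_mult. reflexivity.
  exact (smooth_exv p D u v Hp Huv). exact (smooth_exv q D u v Hq Huv).
Qed.
Lemma pu_plus : forall D (p q : R -> R -> R) u v, smooth p D -> smooth q D -> D u v ->
  pu (fun a b => p a b + q a b) u v = pu p u v + pu q u v.
Proof.
  intros D p q u v Hp Hq Huv. unfold pu. rewrite Derive_plus. reflexivity.
  exact (smooth_exu p D u v Hp Huv). exact (smooth_exu q D u v Hq Huv).
Qed.
Lemma pv_plus : forall D (p q : R -> R -> R) u v, smooth p D -> smooth q D -> D u v ->
  pv (fun a b => p a b + q a b) u v = pv p u v + pv q u v.
Proof.
  intros D p q u v Hp Hq Huv. unfold pv. rewrite Derive_plus. reflexivity.
  exact (smooth_exv p D u v Hp Huv). exact (smooth_exv q D u v Hq Huv).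
Qed.

Lemma pu_dot : forall D (V W : surface) u v, open2 D -> sm3 V D -> sm3 W D -> D u v ->
  pu (fun a b => dot (V a b) (W a b)) u v = dot (Su V u v) (W u v) + dot (V u v) (Su W u v).
Proof.
  intros D V W u v HD [V1 [V2 V3]] [W1 [W2 W3]] Huv. unfold dot.
  rewrite (pu_plus D (fun a b => v1 (V a b) * v1 (W a b) + v2 (V a b) * v2 (W a b))
                     (fun a b => v3 (V a b) * v3 (W a b))); try assumption.
  rewrite (pu_plus D (fun a b => v1 (V a b) * v1 (W a b)) (fun a b => v2 (V a b) * v2 (W a b))); try assumption.
  rewrite (pu_mult D (fun a b => v1 (V a b)) (fun a b => v1 (W a b))); try assumption.
  rewrite (pu_mult D (fun a b => v2 (V a b)) (fun a b => v2 (W a b))); try assumption.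
  rewrite (pu_mult D (fun a b => v3 (V a b)) (fun a b => v3 (W a b))); try assumption.
  unfold Su, sx, sy, sz, v1, v2, v3; simpl. ring.
  all: try (apply smooth_mult; assumption).
  apply smooth_plus; try assumption; apply smooth_mult; assumption.
Qed.
Lemma pv_dot : forall D (V W : surface) u v, open2 D -> sm3 V D -> sm3 W D -> D u v ->
  pv (fun a b => dot (V a b) (W a b)) u v = dot (Sv V u v) (W u v) + dot (V u v) (Sv W u v).
Proof.
  intros D V W u v HD [V1 [V2 V3]] [W1 [W2 W3]] Huv. unfold dot.
  rewrite (pv_plus D (fun a b => v1 (V a b) * v1 (W a b) + v2 (V a b) * v2 (W a b))
                     (fun a b => v3 (V a b) * v3 (W a b))); try assumption.
  rewrite (pv_plus D (fun a b => v1 (V a b) * v1 (W a b)) (fun a b => v2 (V a b) * v2 (W a b))); try assumption.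
  rewrite (pv_mult D (fun a b => v1 (V a b)) (fun a b => v1 (W a b))); try assumption.
  rewrite (pv_mult D (fun a b => v2 (V a b)) (fun a b => v2 (W a b))); try assumption.
  rewrite (pv_mult D (fun a b => v3 (V a b)) (fun a b => v3 (W a b))); try assumption.
  unfold Sv, sx, sy, sz, v1, v2, v3; simpl. ring.
  all: try (apply smooth_mult; assumption).
  apply smooth_plus; try assumption; apply smooth_mult; assumption.
Qed.

Lemma pu_cst : forall D (f : R -> R -> R) c u v, open2 D -> (forall a b, D a b -> f a b = c) -> D u v ->
  pu f u v = 0.
Proof.
  intros D f c u v HD H Huv. rewrite (pu_ext D f (fun _ _ => c) u v HD H Huv). unfold pu. apply Derive_const.
Qed.
Lemma pv_cst : forall D (f : R -> R -> R) c u v, open2 D -> (forall a b, D a b -> f a b = c) -> D u v ->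
  pv f u v = 0.
Proof.
  intros D f c u v HD H Huv. rewrite (pv_ext D f (fun _ _ => c) u v HD H Huv). unfold pv. apply Derive_const.
Qed.

Lemma vec_eq : forall a b : vec3, v1 a = v1 b -> v2 a = v2 b -> v3 a = v3 b -> a = b.
Proof. intros [[a1 a2] a3] [[b1 b2] b3]; unfold v1, v2, v3; simpl; intros; subst; reflexivity. Qed.

Lemma schwarz3 : forall (V : surface) D u v, open2 D -> sm3 V D -> D u v ->
  Su (Sv V) u v = Sv (Su V) u v.
Proof.
  intros V D u v HD [H1 [H2 H3]] Huv. apply vec_eq; unfold Su, Sv, sx, sy, sz, v1, v2, v3; simpl.
  exact (schwarz_sm _ D u v HD H1 Huv). exact (schwarz_sm _ D u v HD H2 Huv). exact (schwarz_sm _ D u v HD H3 Huv).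
Qed.

Lemma dot_comm : forall a b, dot a b = dot b a.
Proof. intros [[a1 a2] a3] [[b1 b2] b3]. unfold dot, v1, v2, v3; simpl. ring. Qed.

Section Codazzi.
Variable x : surface.
Variable D : R -> R -> Prop.
Hypothesis Hreg : regular_surface x D.
Hypothesis HF : forall u v, D u v -> fF x u v = 0.
Hypothesis HM : forall u v, D u v -> fM x u v = 0.

Let HD : open2 D. Proof. apply Hreg. Qed.
Lemma sm3_x : sm3 x D.
Proof. split; [|split]; apply Hreg. Qed.
Lemma sm3_n : sm3 (unormal x) D.
Proof. split; [|split]; [apply (sm_N1 x D Hreg)|apply (sm_N2 x D Hreg)|apply (sm_N3 x D Hreg)]. Qed.

Lemma nA : forall u v, dot (unormal x u v) (Su x u v) = 0.
Proof.
  intros u v. unfold unormal. rewrite dot_scal_l.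
  destruct (Su x u v) as [[a1 a2] a3]; destruct (Sv x u v) as [[b1 b2] b3].
  unfold dot, cross, v1, v2, v3; simpl. ring.
Qed.
Lemma nB : forall u v, dot (unormal x u v) (Sv x u v) = 0.
Proof.
  intros u v. unfold unormal. rewrite dot_scal_l.
  destruct (Su x u v) as [[a1 a2] a3]; destruct (Sv x u v) as [[b1 b2] b3].
  unfold dot, cross, v1, v2, v3; simpl. ring.
Qed.
Lemma ss1 : forall u v, D u v ->
  / vnorm (cc x u v) * / vnorm (cc x u v) * dot (cc x u v) (cc x u v) = 1.
Proof.
  intros u v Huv. assert (H := cc_pos x D Hreg u v Huv). unfold vnorm.
  rewrite <- (sqrt_sqrt (dot (cc x u v) (cc x u v))) at 3 by lra.
  field. apply Rgt_not_eq, sqrt_lt_R0, H.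
Qed.
Lemma nn : forall u v, D u v -> dot (unormal x u v) (unormal x u v) = 1.
Proof.
  intros u v Huv. unfold unormal. rewrite dot_scal_l, dot_comm, dot_scal_l.
  rewrite <- (ss1 u v Huv). unfold cc. ring.
Qed.

Lemma pars : forall u v w z, D u v ->
  fE x u v * fG x u v * dot w z = fG x u v * dot w (Su x u v) * dot z (Su x u v) +
    fE x u v * dot w (Sv x u v) * dot z (Sv x u v) +
    fE x u v * fG x u v * (dot (unormal x u v) w * dot (unormal x u v) z).
Proof.
  intros u v w z Huv. unfold fE, fG, unormal. apply parseval.
  apply HF, Huv. apply (ss1 u v Huv).
Qed.

Lemma codazzi_u : forall u v, D u v ->
  fE x u v * fG x u v * pv (fL x) u v =
  fG x u v * (pv (fE x) u v / 2) * fL x u v + fE x u v * (pv (fE x) u v / 2) * fN x u v.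
Proof.
  intros u v Huv.
  assert (Hx := sm3_x). assert (Hn := sm3_n).
  assert (HA := sm3_Su x D Hx). assert (HB := sm3_Sv x D Hx).
  assert (HP := sm3_Su _ D HA). assert (HMm := sm3_Sv _ D HA).
  assert (Ev : pv (fE x) u v = dot (Sv (Su x) u v) (Su x u v) + dot (Su x u v) (Sv (Su x) u v)).
  { unfold fE. apply (pv_dot D (Su x) (Su x) u v HD HA HA Huv). }
  assert (Lv : pv (fL x) u v = dot (Sv (Su (Su x)) u v) (unormal x u v) + dot (Su (Su x) u v) (Sv (unormal x) u v)).
  { unfold fL. apply (pv_dot D (Su (Su x)) (unormal x) u v HD HP Hn Huv). }
  assert (e1 : dot (Su (unormal x) u v) (Su x u v) + dot (unormal x u v) (Su (Su x) u v) = 0).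
  { rewrite <- (pu_dot D (unormal x) (Su x) u v HD Hn HA Huv). apply (pu_cst D _ 0 u v HD); [intros ? ? ?; apply nA|exact Huv]. }
  assert (e2 : dot (Sv (unormal x) u v) (Su x u v) + dot (unormal x u v) (Sv (Su x) u v) = 0).
  { rewrite <- (pv_dot D (unormal x) (Su x) u v HD Hn HA Huv). apply (pv_cst D _ 0 u v HD); [intros ? ? ?; apply nA|exact Huv]. }
  assert (e3 : dot (Su (unormal x) u v) (Sv x u v) + dot (unormal x u v) (Su (Sv x) u v) = 0).
  { rewrite <- (pu_dot D (unormal x) (Sv x) u v HD Hn HB Huv). apply (pu_cst D _ 0 u v HD); [intros ? ? ?; apply nB|exact Huv]. }
  assert (e4 : dot (Sv (unormal x) u v) (Sv x u v) + dot (unormal x u v) (Sv (Sv x) u v) = 0).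
  { rewrite <- (pv_dot D (unormal x) (Sv x) u v HD Hn HB Huv). apply (pv_cst D _ 0 u v HD); [intros ? ? ?; apply nB|exact Huv]. }
  assert (e5 : dot (Su (unormal x) u v) (unormal x u v) + dot (unormal x u v) (Su (unormal x) u v) = 0).
  { rewrite <- (pu_dot D (unormal x) (unormal x) u v HD Hn Hn Huv). apply (pu_cst D _ 1 u v HD); [intros ? ? ?; apply nn; assumption|exact Huv]. }
  assert (e6 : dot (Sv (unormal x) u v) (unormal x u v) + dot (unormal x u v) (Sv (unormal x) u v) = 0).
  { rewrite <- (pv_dot D (unormal x) (unormal x) u v HD Hn Hn Huv). apply (pv_cst D _ 1 u v HD); [intros ? ? ?; apply nn; assumption|exact Huv]. }
  assert (e7 : dot (Su (Sv (Su x)) u v) (unormal x u v) + dot (Sv (Su x) u v) (Su (unormal x) u v) = 0).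
  { rewrite <- (pu_dot D (Sv (Su x)) (unormal x) u v HD HMm Hn Huv). apply (pu_cst D _ 0 u v HD); [intros ? ? ?; apply HM; assumption|exact Huv]. }
  assert (e8 : dot (Su (Su x) u v) (Sv x u v) + dot (Su x u v) (Su (Sv x) u v) = 0).
  { rewrite <- (pu_dot D (Su x) (Sv x) u v HD HA HB Huv). apply (pu_cst D _ 0 u v HD); [intros ? ? ?; apply HF; assumption|exact Huv]. }
  assert (S1 : Su (Sv x) u v = Sv (Su x) u v) by (apply schwarz3 with D; auto).
  assert (S2 : Su (Sv (Su x)) u v = Sv (Su (Su x)) u v) by (apply schwarz3 with D; auto).
  rewrite S1 in e3, e8. rewrite S2 in e7.
  assert (M0 : dot (Sv (Su x) u v) (unormal x u v) = 0) by (apply HM; auto).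
  assert (P1 := pars u v (Sv (Su x) u v) (Su (unormal x) u v) Huv).
  assert (P2 := pars u v (Su (Su x) u v) (Sv (unormal x) u v) Huv).
  rewrite Ev, Lv. unfold fL, fN.
  set (n := unormal x u v) in *. set (A := Su x u v) in *. set (B := Sv x u v) in *.
  set (P := Su (Su x) u v) in *. set (Mm := Sv (Su x) u v) in *. set (T := Sv (Su (Su x)) u v) in *.
  set (Q := Sv (Sv x) u v) in *. set (nU := Su (unormal x) u v) in *. set (nV := Sv (unormal x) u v) in *.
  set (E := fE x u v) in *. set (G := fG x u v) in *.
  rewrite (dot_comm n P) in e1. rewrite (dot_comm n Mm) in e2, e3. rewrite (dot_comm n Q) in e4.
  rewrite (dot_comm nU n) in e5. rewrite (dot_comm nV n) in e6. rewrite (dot_comm A Mm) in e8.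
  rewrite (dot_comm Mm nU) in e7. rewrite (dot_comm Mm A).
  rewrite (dot_comm n Mm) in P1. rewrite (dot_comm n P) in P2.
  assert (a1 : dot nU A = - dot P n) by lra.
  assert (a2 : dot nV A = 0) by lra.
  assert (a3 : dot nU B = 0) by lra.
  assert (a4 : dot nV B = - dot Q n) by lra.
  assert (a5 : dot n nU = 0) by lra.
  assert (a6 : dot n nV = 0) by lra.
  assert (a7 : dot T n = - dot nU Mm) by lra.
  assert (a8 : dot P B = - dot Mm A) by lra.
  rewrite a1, a3, a5, M0 in P1. rewrite a2, a4, a6, a8 in P2. rewrite a7.
  rewrite (dot_comm nU Mm), (dot_comm A Mm).
  replace (E * G * (- dot Mm nU + dot P nV)) with (- (E * G * dot Mm nU) + E * G * dot P nV) by ring.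
  rewrite P1, P2. field.
Qed.

Lemma Sv_ext3 : forall (V W : surface) u v, (forall a b, D a b -> V a b = W a b) -> D u v ->
  Sv V u v = Sv W u v.
Proof.
  intros V W u v H Huv. apply vec_eq; unfold Sv, sx, sy, sz; simpl;
  apply (pv_ext D) with (2 := fun a b Hab => f_equal _ (H a b Hab)); assumption.
Qed.

Lemma codazzi_v : forall u v, D u v ->
  fE x u v * fG x u v * pu (fN x) u v =
  fE x u v * (pu (fG x) u v / 2) * fN x u v + fG x u v * (pu (fG x) u v / 2) * fL x u v.
Proof.
  intros u v Huv.
  assert (Hx := sm3_x). assert (Hn := sm3_n).
  assert (HA := sm3_Su x D Hx). assert (HB := sm3_Sv x D Hx).
  assert (HQ := sm3_Sv _ D HB). assert (HMm := sm3_Sv _ D HA).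
  assert (Gu : pu (fG x) u v = dot (Su (Sv x) u v) (Sv x u v) + dot (Sv x u v) (Su (Sv x) u v)).
  { unfold fG. apply (pu_dot D (Sv x) (Sv x) u v HD HB HB Huv). }
  assert (Nu : pu (fN x) u v = dot (Su (Sv (Sv x)) u v) (unormal x u v) + dot (Sv (Sv x) u v) (Su (unormal x) u v)).
  { unfold fN. apply (pu_dot D (Sv (Sv x)) (unormal x) u v HD HQ Hn Huv). }
  assert (e1 : dot (Su (unormal x) u v) (Su x u v) + dot (unormal x u v) (Su (Su x) u v) = 0).
  { rewrite <- (pu_dot D (unormal x) (Su x) u v HD Hn HA Huv). apply (pu_cst D _ 0 u v HD); [intros ? ? ?; apply nA|exact Huv]. }
  assert (e2 : dot (Sv (unormal x) u v) (Su x u v) + dot (unormal x u v) (Sv (Su x) u v) = 0).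
  { rewrite <- (pv_dot D (unormal x) (Su x) u v HD Hn HA Huv). apply (pv_cst D _ 0 u v HD); [intros ? ? ?; apply nA|exact Huv]. }
  assert (e3 : dot (Su (unormal x) u v) (Sv x u v) + dot (unormal x u v) (Su (Sv x) u v) = 0).
  { rewrite <- (pu_dot D (unormal x) (Sv x) u v HD Hn HB Huv). apply (pu_cst D _ 0 u v HD); [intros ? ? ?; apply nB|exact Huv]. }
  assert (e4 : dot (Sv (unormal x) u v) (Sv x u v) + dot (unormal x u v) (Sv (Sv x) u v) = 0).
  { rewrite <- (pv_dot D (unormal x) (Sv x) u v HD Hn HB Huv). apply (pv_cst D _ 0 u v HD); [intros ? ? ?; apply nB|exact Huv]. }
  assert (e5 : dot (Su (unormal x) u v) (unormal x u v) + dot (unormal x u v) (Su (unormal x) u v) = 0).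
  { rewrite <- (pu_dot D (unormal x) (unormal x) u v HD Hn Hn Huv). apply (pu_cst D _ 1 u v HD); [intros ? ? ?; apply nn; assumption|exact Huv]. }
  assert (e6 : dot (Sv (unormal x) u v) (unormal x u v) + dot (unormal x u v) (Sv (unormal x) u v) = 0).
  { rewrite <- (pv_dot D (unormal x) (unormal x) u v HD Hn Hn Huv). apply (pv_cst D _ 1 u v HD); [intros ? ? ?; apply nn; assumption|exact Huv]. }
  assert (e9 : dot (Sv (Sv (Su x)) u v) (unormal x u v) + dot (Sv (Su x) u v) (Sv (unormal x) u v) = 0).
  { rewrite <- (pv_dot D (Sv (Su x)) (unormal x) u v HD HMm Hn Huv). apply (pv_cst D _ 0 u v HD); [intros ? ? ?; apply HM; assumption|exact Huv]. }
  assert (e10 : dot (Sv (Su x) u v) (Sv x u v) + dot (Su x u v) (Sv (Sv x) u v) = 0).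
  { rewrite <- (pv_dot D (Su x) (Sv x) u v HD HA HB Huv). apply (pv_cst D _ 0 u v HD); [intros ? ? ?; apply HF; assumption|exact Huv]. }
  assert (S1 : Su (Sv x) u v = Sv (Su x) u v) by (apply schwarz3 with D; auto).
  assert (S3 : Su (Sv (Sv x)) u v = Sv (Sv (Su x)) u v).
  { rewrite (schwarz3 (Sv x) D u v HD HB Huv). apply Sv_ext3; [|exact Huv].
    intros a b Hab. apply schwarz3 with D; assumption. }
  rewrite S1 in e3, Gu. rewrite S3 in Nu.
  assert (M0 : dot (Sv (Su x) u v) (unormal x u v) = 0) by (apply HM; auto).
  assert (P1 := pars u v (Sv (Su x) u v) (Sv (unormal x) u v) Huv).
  assert (P2 := pars u v (Sv (Sv x) u v) (Su (unormal x) u v) Huv).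
  rewrite Gu, Nu. unfold fL, fN.
  set (n := unormal x u v) in *. set (A := Su x u v) in *. set (B := Sv x u v) in *.
  set (P := Su (Su x) u v) in *. set (Mm := Sv (Su x) u v) in *. set (T := Sv (Sv (Su x)) u v) in *.
  set (Q := Sv (Sv x) u v) in *. set (nU := Su (unormal x) u v) in *. set (nV := Sv (unormal x) u v) in *.
  set (E := fE x u v) in *. set (G := fG x u v) in *.
  rewrite (dot_comm n P) in e1. rewrite (dot_comm n Mm) in e2, e3. rewrite (dot_comm n Q) in e4.
  rewrite (dot_comm nU n) in e5. rewrite (dot_comm nV n) in e6. rewrite (dot_comm A Q) in e10.
  rewrite (dot_comm n Mm) in P1. rewrite (dot_comm n Q) in P2.
  assert (a1 : dot nU A = - dot P n) by lra.
  assert (a2 : dot nV A = 0) by lra.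
  assert (a3 : dot nU B = 0) by lra.
  assert (a4 : dot nV B = - dot Q n) by lra.
  assert (a5 : dot n nU = 0) by lra.
  assert (a6 : dot n nV = 0) by lra.
  assert (a9 : dot T n = - dot Mm nV) by lra.
  assert (a10 : dot Q A = - dot Mm B) by lra.
  rewrite a2, a4, a6, M0 in P1. rewrite a1, a3, a5, a10 in P2. rewrite a9.
  rewrite (dot_comm B Mm).
  replace (E * G * (- dot Mm nV + dot Q nU)) with (- (E * G * dot Mm nV) + E * G * dot Q nU) by ring.
  rewrite P1, P2. field.
Qed.
End Codazzi.

Lemma dot_scal_r : forall s a w, dot a (vscale s w) = s * dot a w.
Proof. intros s [[a1 a2] a3] [[w1 w2] w3]. unfold dot, vscale, v1, v2, v3; simpl. ring. Qed.
Lemma cross_scal : forall s t a b, cross (vscale s a) (vscale t b) = vscale (s * t) (cross a b).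
Proof.
  intros s t [[a1 a2] a3] [[b1 b2] b3]. apply vec_eq; unfold cross, vscale, v1, v2, v3; simpl; ring.
Qed.
Lemma vnorm_scal : forall s a, 0 < s -> vnorm (vscale s a) = s * vnorm a.
Proof.
  intros s a Hs. unfold vnorm. rewrite dot_scal_l, dot_scal_r.
  replace (s * (s * dot a a)) with ((s * s) * dot a a) by ring.
  rewrite sqrt_mult_alt. rewrite sqrt_square; lra. nra.
Qed.
Lemma unormal_scal : forall s t a b, 0 < s -> 0 < t -> dot (cross a b) (cross a b) > 0 ->
  vscale (/ vnorm (cross (vscale s a) (vscale t b))) (cross (vscale s a) (vscale t b)) =
  vscale (/ vnorm (cross a b)) (cross a b).
Proof.
  intros s t a b Hs Ht Hc. rewrite cross_scal, vnorm_scal by nra.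
  assert (0 < vnorm (cross a b)) by (apply sqrt_lt_R0; lra).
  destruct (cross a b) as [[c1 c2] c3].
  apply vec_eq; unfold vscale, v1, v2, v3; simpl; field; split; lra.
Qed.

Section Reparam.
Variable x : surface.
Variables V W : R -> R -> Prop.
Variables al be : R -> R.
Hypothesis HV : open2 V.
Hypothesis HW : open2 W.
Hypothesis HWV : forall a b, W a b -> V (al a) (be b).
Hypothesis Hal : smooth (fun a b => al a) W.
Hypothesis Hbe : smooth (fun a b => be b) W.
Hypothesis Halp : forall a b, W a b -> 0 < Derive al a.
Hypothesis Hbep : forall a b, W a b -> 0 < Derive be b.

Let th := fun a b : R => (al a, be b).
Let y := reparam x th.

Lemma pu_comp : forall (h : R -> R -> R) a b, smooth h V -> W a b ->
  pu (fun a b => h (al a) (be b)) a b = Derive al a * pu h (al a) (be b).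
Proof.
  intros h a b Hh Hab. unfold pu. rewrite (Derive_comp (fun t => h t (be b)) al). reflexivity.
  exact (smooth_exu h V _ _ Hh (HWV a b Hab)). exact (smooth_exu _ W a b Hal Hab).
Qed.
Lemma pv_comp : forall (h : R -> R -> R) a b, smooth h V -> W a b ->
  pv (fun a b => h (al a) (be b)) a b = Derive be b * pv h (al a) (be b).
Proof.
  intros h a b Hh Hab. unfold pv. rewrite (Derive_comp (fun t => h (al a) t) be). reflexivity.
  exact (smooth_exv h V _ _ Hh (HWV a b Hab)). exact (smooth_exv _ W a b Hbe Hab).
Qed.

Lemma sm_comp : forall (h : R -> R -> R), smooth h V -> smooth (fun a b => h (al a) (be b)) W.
Proof. intros h Hh. apply smooth_comp with V; assumption. Qed.

Lemma sm_al1 : smooth (fun a b => Derive al a) W.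
Proof. exact (smooth_pu W _ Hal). Qed.
Lemma sm_be1 : smooth (fun a b => Derive be b) W.
Proof. exact (smooth_pv W _ Hbe). Qed.

Lemma pu_pc : forall (p h : R -> R -> R) a b, smooth p W -> smooth h V -> W a b ->
  pu (fun a b => p a b * h (al a) (be b)) a b = pu p a b * h (al a) (be b) + p a b * (Derive al a * pu h (al a) (be b)).
Proof.
  intros p h a b Hp Hh Hab. rewrite (pu_mult W p (fun a b => h (al a) (be b))); try assumption.
  rewrite pu_comp; try assumption. reflexivity. apply sm_comp; assumption.
Qed.
Lemma pv_pc : forall (p h : R -> R -> R) a b, smooth p W -> smooth h V -> W a b ->
  pv (fun a b => p a b * h (al a) (be b)) a b = pv p a b * h (al a) (be b) + p a b * (Derive be b * pv h (al a) (be b)).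
Proof.
  intros p h a b Hp Hh Hab. rewrite (pv_mult W p (fun a b => h (al a) (be b))); try assumption.
  rewrite pv_comp; try assumption. reflexivity. apply sm_comp; assumption.
Qed.

Hypothesis Hreg : regular_surface x V.
Let Hx1 : smooth (sx x) V. Proof. apply Hreg. Qed.
Let Hx2 : smooth (sy x) V. Proof. apply Hreg. Qed.
Let Hx3 : smooth (sz x) V. Proof. apply Hreg. Qed.

Lemma y_eq : forall a b, y a b = x (al a) (be b).
Proof. reflexivity. Qed.

Lemma Su_y : forall a b, W a b -> Su y a b = vscale (Derive al a) (Su x (al a) (be b)).
Proof.
  intros a b Hab. apply vec_eq; unfold Su, vscale, v1, v2, v3; simpl.
  exact (pu_comp (sx x) a b Hx1 Hab). exact (pu_comp (sy x) a b Hx2 Hab). exact (pu_comp (sz x) a b Hx3 Hab).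
Qed.
Lemma Sv_y : forall a b, W a b -> Sv y a b = vscale (Derive be b) (Sv x (al a) (be b)).
Proof.
  intros a b Hab. apply vec_eq; unfold Sv, vscale, v1, v2, v3; simpl.
  exact (pv_comp (sx x) a b Hx1 Hab). exact (pv_comp (sy x) a b Hx2 Hab). exact (pv_comp (sz x) a b Hx3 Hab).
Qed.

Definition vplus (a b : vec3) : vec3 := (v1 a + v1 b, v2 a + v2 b, v3 a + v3 b).

Lemma pv_a : forall (p : R -> R) a b, pv (fun a b => p a) a b = 0.
Proof. intros. unfold pv. apply Derive_const. Qed.
Lemma pu_b : forall (p : R -> R) a b, pu (fun a b => p b) a b = 0.
Proof. intros. unfold pu. apply Derive_const. Qed.

Lemma pu_pu_comp : forall (h : R -> R -> R) a b, smooth h V -> W a b ->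
  pu (fun a b => pu (fun a b => h (al a) (be b)) a b) a b =
  Derive (Derive al) a * pu h (al a) (be b) + Derive al a * Derive al a * pu (pu h) (al a) (be b).
Proof.
  intros h a b Hh Hab.
  rewrite (pu_ext W _ (fun a b => Derive al a * pu h (al a) (be b)) a b HW); [| |exact Hab].
  - rewrite (pu_pc (fun a b => Derive al a)); [|exact sm_al1|apply smooth_pu; assumption|exact Hab].
    change (pu (fun a b => Derive al a) a b) with (Derive (Derive al) a). ring.
  - intros a' b' Hab'. apply pu_comp; assumption.
Qed.
Lemma pv_pu_comp : forall (h : R -> R -> R) a b, smooth h V -> W a b ->
  pv (fun a b => pu (fun a b => h (al a) (be b)) a b) a b =
  Derive al a * Derive be b * pv (pu h) (al a) (be b).
Proof.
  intros h a b Hh Hab.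
  rewrite (pv_ext W _ (fun a b => Derive al a * pu h (al a) (be b)) a b HW); [| |exact Hab].
  - rewrite (pv_pc (fun a b => Derive al a)); [|exact sm_al1|apply smooth_pu; assumption|exact Hab].
    rewrite pv_a. ring.
  - intros a' b' Hab'. apply pu_comp; assumption.
Qed.
Lemma pv_pv_comp : forall (h : R -> R -> R) a b, smooth h V -> W a b ->
  pv (fun a b => pv (fun a b => h (al a) (be b)) a b) a b =
  Derive (Derive be) b * pv h (al a) (be b) + Derive be b * Derive be b * pv (pv h) (al a) (be b).
Proof.
  intros h a b Hh Hab.
  rewrite (pv_ext W _ (fun a b => Derive be b * pv h (al a) (be b)) a b HW); [| |exact Hab].
  - rewrite (pv_pc (fun a b => Derive be b)); [|exact sm_be1|apply smooth_pv; assumption|exact Hab].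
    change (pv (fun a b => Derive be b) a b) with (Derive (Derive be) b). ring.
  - intros a' b' Hab'. apply pv_comp; assumption.
Qed.

Lemma SuSu_y : forall a b, W a b -> Su (Su y) a b =
  vplus (vscale (Derive (Derive al) a) (Su x (al a) (be b))) (vscale (Derive al a * Derive al a) (Su (Su x) (al a) (be b))).
Proof.
  intros a b Hab. apply vec_eq; unfold vplus, vscale, v1, v2, v3; simpl.
  exact (pu_pu_comp (sx x) a b Hx1 Hab). exact (pu_pu_comp (sy x) a b Hx2 Hab). exact (pu_pu_comp (sz x) a b Hx3 Hab).
Qed.
Lemma SvSu_y : forall a b, W a b -> Sv (Su y) a b =
  vscale (Derive al a * Derive be b) (Sv (Su x) (al a) (be b)).
Proof.
  intros a b Hab. apply vec_eq; unfold vscale, v1, v2, v3; simpl.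
  exact (pv_pu_comp (sx x) a b Hx1 Hab). exact (pv_pu_comp (sy x) a b Hx2 Hab). exact (pv_pu_comp (sz x) a b Hx3 Hab).
Qed.
Lemma SvSv_y : forall a b, W a b -> Sv (Sv y) a b =
  vplus (vscale (Derive (Derive be) b) (Sv x (al a) (be b))) (vscale (Derive be b * Derive be b) (Sv (Sv x) (al a) (be b))).
Proof.
  intros a b Hab. apply vec_eq; unfold vplus, vscale, v1, v2, v3; simpl.
  exact (pv_pv_comp (sx x) a b Hx1 Hab). exact (pv_pv_comp (sy x) a b Hx2 Hab). exact (pv_pv_comp (sz x) a b Hx3 Hab).
Qed.

Lemma dot_vplus_l : forall a b w, dot (vplus a b) w = dot a w + dot b w.
Proof. intros [[a1 a2] a3] [[b1 b2] b3] [[w1 w2] w3]. unfold dot, vplus, v1, v2, v3; simpl. ring. Qed.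

Lemma fE_pos : forall u v, V u v -> 0 < fE x u v.
Proof.
  intros u v Huv. assert (H := proj2 (proj2 (proj2 (proj2 Hreg))) u v Huv).
  unfold fE. destruct (Su x u v) as [[a1 a2] a3]. destruct (Sv x u v) as [[b1 b2] b3].
  unfold dot, v1, v2, v3 in *; simpl in *.
  destruct (Rlt_dec 0 (a1 * a1 + a2 * a2 + a3 * a3)) as [h|h]; [exact h|].
  exfalso. apply H. assert (a1 = 0) by nra. assert (a2 = 0) by nra. assert (a3 = 0) by nra. subst.
  unfold cross, v1, v2, v3; simpl. apply vec_eq; unfold v1, v2, v3; simpl; ring.
Qed.
Lemma fG_pos : forall u v, V u v -> 0 < fG x u v.
Proof.
  intros u v Huv. assert (H := proj2 (proj2 (proj2 (proj2 Hreg))) u v Huv).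
  unfold fG. destruct (Su x u v) as [[a1 a2] a3]. destruct (Sv x u v) as [[b1 b2] b3].
  unfold dot, v1, v2, v3 in *; simpl in *.
  destruct (Rlt_dec 0 (b1 * b1 + b2 * b2 + b3 * b3)) as [h|h]; [exact h|].
  exfalso. apply H. assert (b1 = 0) by nra. assert (b2 = 0) by nra. assert (b3 = 0) by nra. subst.
  unfold cross, v1, v2, v3; simpl. apply vec_eq; unfold v1, v2, v3; simpl; ring.
Qed.

Lemma cc_y : forall a b, W a b -> cross (Su y a b) (Sv y a b) = vscale (Derive al a * Derive be b) (cc x (al a) (be b)).
Proof. intros a b Hab. rewrite Su_y, Sv_y, cross_scal by exact Hab. reflexivity. Qed.

Lemma un_y : forall a b, W a b -> unormal y a b = unormal x (al a) (be b).
Proof.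
  intros a b Hab. unfold unormal. rewrite Su_y, Sv_y by exact Hab.
  apply unormal_scal. apply Halp with b; exact Hab. apply Hbep with a; exact Hab.
  apply (cc_pos x V Hreg), HWV, Hab.
Qed.

Lemma fE_y : forall a b, W a b -> fE y a b = Derive al a * Derive al a * fE x (al a) (be b).
Proof. intros a b Hab. unfold fE. rewrite Su_y, dot_scal_l, dot_scal_r by exact Hab. ring. Qed.
Lemma fF_y : forall a b, W a b -> fF y a b = Derive al a * Derive be b * fF x (al a) (be b).
Proof. intros a b Hab. unfold fF. rewrite Su_y, Sv_y, dot_scal_l, dot_scal_r by exact Hab. ring. Qed.
Lemma fG_y : forall a b, W a b -> fG y a b = Derive be b * Derive be b * fG x (al a) (be b).
Proof. intros a b Hab. unfold fG. rewrite Sv_y, dot_scal_l, dot_scal_r by exact Hab. ring. Qed.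

Lemma nA' : forall u v, dot (Su x u v) (unormal x u v) = 0.
Proof.
  intros u v. unfold unormal. rewrite dot_scal_r.
  destruct (Su x u v) as [[a1 a2] a3]; destruct (Sv x u v) as [[b1 b2] b3].
  unfold dot, cross, v1, v2, v3; simpl. ring.
Qed.
Lemma nB' : forall u v, dot (Sv x u v) (unormal x u v) = 0.
Proof.
  intros u v. unfold unormal. rewrite dot_scal_r.
  destruct (Su x u v) as [[a1 a2] a3]; destruct (Sv x u v) as [[b1 b2] b3].
  unfold dot, cross, v1, v2, v3; simpl. ring.
Qed.

Lemma fL_y : forall a b, W a b -> fL y a b = Derive al a * Derive al a * fL x (al a) (be b).
Proof.
  intros a b Hab. unfold fL. rewrite SuSu_y, un_y, dot_vplus_l, !dot_scal_l, nA' by exact Hab. ring.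
Qed.
Lemma fM_y : forall a b, W a b -> fM y a b = Derive al a * Derive be b * fM x (al a) (be b).
Proof.
  intros a b Hab. unfold fM. rewrite SvSu_y, un_y, !dot_scal_l by exact Hab. ring.
Qed.
Lemma fN_y : forall a b, W a b -> fN y a b = Derive be b * Derive be b * fN x (al a) (be b).
Proof.
  intros a b Hab. unfold fN. rewrite SvSv_y, un_y, dot_vplus_l, !dot_scal_l, nB' by exact Hab. ring.
Qed.

Lemma sm_fE : smooth (fE x) V.
Proof.
  assert (H := sm3_Su x V (conj Hx1 (conj Hx2 Hx3))). destruct H as [H1 [H2 H3]].
  unfold fE, dot. apply smooth_plus; auto. apply smooth_plus; auto.
  all: apply smooth_mult; auto.
Qed.
Lemma sm_fG : smooth (fG x) V.
Proof.
  assert (H := sm3_Sv x V (conj Hx1 (conj Hx2 Hx3))). destruct H as [H1 [H2 H3]].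
  unfold fG, dot. apply smooth_plus; auto. apply smooth_plus; auto.
  all: apply smooth_mult; auto.
Qed.

Lemma pv_fE_y : forall a b, W a b -> pv (fE y) a b = Derive al a * Derive al a * (Derive be b * pv (fE x) (al a) (be b)).
Proof.
  intros a b Hab.
  rewrite (pv_ext W _ (fun a b => (Derive al a * Derive al a) * fE x (al a) (be b)) a b HW); [| |exact Hab].
  - rewrite (pv_pc (fun a b => Derive al a * Derive al a)); [|apply smooth_mult; [exact HW|exact sm_al1|exact sm_al1]|exact sm_fE|exact Hab].
    rewrite pv_a. ring.
  - intros a' b' Hab'. apply fE_y; assumption.
Qed.
Lemma pu_fG_y : forall a b, W a b -> pu (fG y) a b = Derive be b * Derive be b * (Derive al a * pu (fG x) (al a) (be b)).
Proof.
  intros a b Hab.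
  rewrite (pu_ext W _ (fun a b => (Derive be b * Derive be b) * fG x (al a) (be b)) a b HW); [| |exact Hab].
  - rewrite (pu_pc (fun a b => Derive be b * Derive be b)); [|apply smooth_mult; [exact HW|exact sm_be1|exact sm_be1]|exact sm_fG|exact Hab].
    rewrite pu_b. ring.
  - intros a' b' Hab'. apply fG_y; assumption.
Qed.

Lemma nu1_y : forall a b, W a b -> nu1 y a b = nu1 x (al a) (be b).
Proof.
  intros a b Hab. unfold nu1. rewrite fL_y, fE_y by exact Hab.
  assert (h1 := Halp a b Hab). assert (h2 := fE_pos _ _ (HWV a b Hab)).
  field. split; lra.
Qed.
Lemma nu2_y : forall a b, W a b -> nu2 y a b = nu2 x (al a) (be b).
Proof.
  intros a b Hab. unfold nu2. rewrite fN_y, fG_y by exact Hab.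
  assert (h1 := Hbep a b Hab). assert (h2 := fG_pos _ _ (HWV a b Hab)).
  field. split; lra.
Qed.

Lemma sqrt_sq_mult : forall s t, 0 < s -> 0 <= t -> sqrt (s * s * t) = s * sqrt t.
Proof. intros s t Hs Ht. rewrite sqrt_mult_alt by nra. rewrite sqrt_square; lra. Qed.

Lemma gam1_y : forall a b, W a b -> gam1 y a b = gam1 x (al a) (be b).
Proof.
  intros a b Hab. unfold gam1. rewrite pv_fE_y, fE_y, fG_y by exact Hab.
  assert (h1 := Halp a b Hab). assert (h3 := Hbep a b Hab).
  assert (h2 := fE_pos _ _ (HWV a b Hab)). assert (h4 := fG_pos _ _ (HWV a b Hab)).
  rewrite sqrt_sq_mult by lra. assert (0 < sqrt (fG x (al a) (be b))) by (apply sqrt_lt_R0; lra).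
  field. repeat split; lra.
Qed.
Lemma gam2_y : forall a b, W a b -> gam2 y a b = gam2 x (al a) (be b).
Proof.
  intros a b Hab. unfold gam2. rewrite pu_fG_y, fE_y, fG_y by exact Hab.
  assert (h1 := Halp a b Hab). assert (h3 := Hbep a b Hab).
  assert (h2 := fE_pos _ _ (HWV a b Hab)). assert (h4 := fG_pos _ _ (HWV a b Hab)).
  rewrite sqrt_sq_mult by lra. assert (0 < sqrt (fE x (al a) (be b))) by (apply sqrt_lt_R0; lra).
  field. repeat split; lra.
Qed.

Lemma reg_y : regular_surface y W.
Proof.
  split; [exact HW|split; [|split; [|split]]].
  - exact (sm_comp (sx x) Hx1).
  - exact (sm_comp (sy x) Hx2).
  - exact (sm_comp (sz x) Hx3).
  - intros a b Hab. rewrite cc_y by exact Hab. intros Hc.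
    assert (H := cc_pos x V Hreg _ _ (HWV a b Hab)).
    assert (h1 := Halp a b Hab). assert (h3 := Hbep a b Hab).
    assert (H0 : dot (vscale (Derive al a * Derive be b) (cc x (al a) (be b)))
                (vscale (Derive al a * Derive be b) (cc x (al a) (be b))) = 0).
    { rewrite Hc. unfold dot, v1, v2, v3; simpl. ring. }
    rewrite dot_scal_l, dot_scal_r in H0.
    assert (0 < Derive al a * Derive be b) by (apply Rmult_lt_0_compat; lra).
    assert (0 < (Derive al a * Derive be b) * ((Derive al a * Derive be b) * dot (cc x (al a) (be b)) (cc x (al a) (be b)))).
    { apply Rmult_lt_0_compat; [lra|apply Rmult_lt_0_compat; lra]. }
    lra.
Qed.

Lemma srp_y : strongly_regular_principal x V -> strongly_regular_principal y W.
Proof.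
  intros [_ [H1 H2]]. split; [exact reg_y|split].
  - intros a b Hab. rewrite fF_y, fM_y by exact Hab.
    destruct (H1 _ _ (HWV a b Hab)) as [e1 e2]. rewrite e1, e2. split; ring.
  - intros a b Hab. rewrite nu1_y, nu2_y, gam1_y, gam2_y by exact Hab. apply H2, HWV, Hab.
Qed.
End Reparam.


Lemma isd_cont_pt : forall (f : R -> R) x l, is_derive f x l -> continuity_pt f x.
Proof. intros f x l H. apply continuity_pt_filterlim. apply (exd_cont f x). exists l; exact H. Qed.

Lemma mono_of_deriv : forall (phi dphi : R -> R) p q,
  (forall t, p <= t <= q -> is_derive phi t (dphi t)) -> (forall t, p <= t <= q -> 0 < dphi t) ->
  forall t1 t2, p <= t1 -> t1 < t2 -> t2 <= q -> phi t1 < phi t2.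
Proof.
  intros phi dphi p q Hd Hp t1 t2 H1 H2 H3.
  destruct (MVT_gen phi t1 t2 dphi) as [c [Hc Heq]].
  - intros z Hz. apply Hd. rewrite Rmin_left, Rmax_right in Hz by lra. lra.
  - intros z Hz. rewrite Rmin_left, Rmax_right in Hz by lra. apply isd_cont_pt with (dphi z). apply Hd; lra.
  - rewrite Rmin_left, Rmax_right in Hc by lra.
    assert (0 < dphi c) by (apply Hp; lra). nra.
Qed.

Lemma inv_fun : forall (phi dphi : R -> R) p q, p < q ->
  (forall t, p <= t <= q -> is_derive phi t (dphi t)) -> (forall t, p <= t <= q -> 0 < dphi t) ->
  exists psi : R -> R,
   (forall s, phi p < s < phi q -> p < psi s < q /\ phi (psi s) = s /\ is_derive psi s (/ dphi (psi s))) /\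
   (forall t, p < t < q -> psi (phi t) = t).
Proof.
  intros phi dphi p q Hpq Hd Hpos.
  assert (Hmono := mono_of_deriv phi dphi p q Hd Hpos).
  assert (Hcont : forall t, p <= t <= q -> continuity_pt phi t).
  { intros t Ht. apply isd_cont_pt with (dphi t). apply Hd, Ht. }
  pose (psi := fun s => epsilon (inhabits 0) (fun t => p <= t <= q /\ phi t = s)).
  assert (Hpsi : forall s, phi p <= s <= phi q -> p <= psi s <= q /\ phi (psi s) = s).
  { intros s Hs. unfold psi. apply epsilon_spec.
    destruct (f_interv_is_interv phi p q s Hpq Hs Hcont) as [t Ht]. exists t; exact Ht. }
  assert (Hinj : forall t1 t2, p <= t1 <= q -> p <= t2 <= q -> phi t1 = phi t2 -> t1 = t2).
  { intros t1 t2 H1 H2 He. destruct (Rtotal_order t1 t2) as [h|[h|h]]; auto.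
    - assert (phi t1 < phi t2) by (apply Hmono; lra). lra.
    - assert (phi t2 < phi t1) by (apply Hmono; lra). lra. }
  exists psi. split.
  - intros s Hs.
    assert (Hs' : phi p <= s <= phi q) by lra.
    destruct (Hpsi s Hs') as [H1 H2].
    assert (Hstr : p < psi s < q).
    { split; destruct (Req_dec (psi s) p) as [e|e]; try lra;
        destruct (Req_dec (psi s) q) as [e'|e']; try lra;
        [rewrite e in H2; lra| rewrite e' in H2; lra]. }
    split; [exact Hstr|split; [exact H2|]].
    pose (lb := (phi p + s) / 2). pose (ub := (s + phi q) / 2).
    assert (Hlb : phi p < lb < s) by (unfold lb; lra).
    assert (Hub : s < ub < phi q) by (unfold ub; lra).
    destruct (Hpsi lb ltac:(lra)) as [Hl1 Hl2].
    destruct (Hpsi ub ltac:(lra)) as [Hu1 Hu2].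
    assert (Hcg : continuity_pt psi s).
    { apply (continuity_pt_recip_interv phi psi p q Hpq).
      - intros; apply Hmono; assumption.
      - intros z Hz1 Hz2. unfold comp, id. apply Hpsi; lra.
      - intros z Hz1 Hz2. apply Hpsi; lra.
      - exact Hcont.
      - lra. }
    assert (Hord : psi lb <= psi s <= psi ub).
    { split.
      - destruct (Rle_dec (psi lb) (psi s)) as [h|h]; [exact h|].
        assert (phi (psi s) < phi (psi lb)) by (apply Hmono; lra). lra.
      - destruct (Rle_dec (psi s) (psi ub)) as [h|h]; [exact h|].
        assert (phi (psi ub) < phi (psi s)) by (apply Hmono; lra). lra. }
    assert (Prf : forall a, psi lb <= a <= psi ub -> derivable_pt phi a).
    { intros a Ha. apply ex_derive_Reals_0. exists (dphi a). apply Hd. lra. }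
    assert (Hl := derivable_pt_lim_recip_interv phi psi lb ub s Prf Hcg ltac:(lra) ltac:(lra) Hord).
    rewrite (Derive_Reals phi (psi s)) in Hl.
    rewrite (is_derive_unique phi (psi s) (dphi (psi s))) in Hl by (apply Hd; lra).
    apply is_derive_Reals.
    replace (/ dphi (psi s)) with (1 / dphi (psi s)) by (field; apply Rgt_not_eq, Hpos; lra).
    apply Hl.
    + intros z Hz. unfold comp, id. apply Hpsi. lra.
    + apply Rgt_not_eq, Hpos; lra.
  - intros t Ht. assert (Hr : phi p <= phi t <= phi q).
    { split; apply Rlt_le, Hmono; lra. }
    destruct (Hpsi _ Hr) as [H1 H2]. apply Hinj; lra.
Qed.

Lemma Ck_ex_diff : forall k (h : R -> R -> R) D u v, Ck k h D -> D u v -> ex_diff_n h k u v.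
Proof.
  induction k; intros h D u v H Huv.
  - simpl. split; [|exact I]. apply cont_2d. exact (Ck_cont _ _ _ _ _ H Huv).
  - simpl. split; [apply cont_2d; exact (Ck_cont _ _ _ _ _ H Huv)|].
    split; [exact (Ck_exu _ _ _ _ _ H Huv)|]. split; [exact (Ck_exv _ _ _ _ _ H Huv)|].
    split.
    + exact (IHk (pu h) D u v (Ck_pu _ _ _ H) Huv).
    + exact (IHk (pv h) D u v (Ck_pv _ _ _ H) Huv).
Qed.

Lemma DL1 : forall (h : R -> R -> R) u v du dv,
  DL_pol 1 h u v du dv = h u v + pu h u v * du + pv h u v * dv.
Proof.
  intros. unfold DL_pol, differential. simpl. unfold partial_derive. simpl.
  unfold Binomial.C; simpl. unfold pu, pv. field.
Qed.

Lemma smooth_diff : forall (h : R -> R -> R) D u v, open2 D -> smooth h D -> D u v ->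
  differentiable_pt h u v.
Proof.
  intros h D u v HD Hh Huv. exists (pu h u v), (pv h u v).
  destruct (Taylor_Lagrange_2d h 1 u v) as [C HC].
  { generalize (open2_loc D u v HD Huv). apply locally_2d_impl. apply locally_2d_forall.
    intros a b Hab. apply Ck_ex_diff with D. apply Hh. exact Hab. }
  intros eps. destruct HC as [d Hd].
  assert (Hc1 : 0 < Rabs C + 1) by (generalize (Rabs_pos C); lra).
  assert (He : 0 < Rmin d (eps / (Rabs C + 1))).
  { apply Rmin_pos. apply cond_pos. apply Rdiv_lt_0_compat. apply cond_pos. lra. }
  exists (mkposreal _ He). intros a b Ha Hb. simpl in Ha, Hb.
  assert (Ha1 : Rabs (a - u) < d) by (eapply Rlt_le_trans; [exact Ha|apply Rmin_l]).
  assert (Hb1 : Rabs (b - v) < d) by (eapply Rlt_le_trans; [exact Hb|apply Rmin_l]).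
  assert (Ha2 : Rabs (a - u) < eps / (Rabs C + 1)) by (eapply Rlt_le_trans; [exact Ha|apply Rmin_r]).
  assert (Hb2 : Rabs (b - v) < eps / (Rabs C + 1)) by (eapply Rlt_le_trans; [exact Hb|apply Rmin_r]).
  specialize (Hd a b Ha1 Hb1). rewrite DL1 in Hd.
  set (m := Rmax (Rabs (a - u)) (Rabs (b - v))) in *.
  assert (Hm0 : 0 <= m) by (unfold m; eapply Rle_trans; [apply Rabs_pos|apply Rmax_l]).
  assert (Hm1 : m <= eps / (Rabs C + 1)) by (unfold m; apply Rmax_lub; lra).
  replace (h a b - h u v - (pu h u v * (a - u) + pv h u v * (b - v)))
    with (h a b - (h u v + pu h u v * (a - u) + pv h u v * (b - v))) by ring.
  eapply Rle_trans; [exact Hd|]. simpl.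
  assert (HC : C <= Rabs C + 1) by (generalize (Rle_abs C); lra).
  assert (Hm2 : m * (Rabs C + 1) <= eps).
  { apply Rmult_le_compat_r with (r := Rabs C + 1) in Hm1; [|lra].
    unfold Rdiv in Hm1. rewrite Rmult_assoc, Rinv_l, Rmult_1_r in Hm1 by lra. exact Hm1. }
  assert (C * (m * (m * 1)) <= (Rabs C + 1) * (m * m)).
  { rewrite Rmult_1_r. apply Rmult_le_compat_r; [nra|exact HC]. }
  nra.
Qed.

Lemma smooth_from_derivs : forall (h p q : R -> R -> R) D, open2 D ->
  (forall u v, D u v -> continuous (fun z : R * R => h (fst z) (snd z)) (u, v)) ->
  (forall u v, D u v -> ex_derive (fun t => h t v) u /\ ex_derive (fun t => h u t) v) ->
  (forall u v, D u v -> pu h u v = p u v) -> (forall u v, D u v -> pv h u v = q u v) ->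
  smooth p D -> smooth q D -> smooth h D.
Proof.
  intros h p q D HD Hc He Hp Hq Sp Sq k. destruct k as [|k].
  - exact Hc.
  - split; [exact Hc|split; [exact He|split]].
    + apply Ck_ext with p; [exact HD| |apply Sp]. intros; symmetry; auto.
    + apply Ck_ext with q; [exact HD| |apply Sq]. intros; symmetry; auto.
Qed.

Lemma smooth_id1 : forall D, open2 D -> smooth (fun a b => a) D.
Proof.
  intros D HD. apply smooth_from_derivs with (fun _ _ => 1) (fun _ _ => 0); auto.
  - intros u v _. apply continuous_fst.
  - intros u v _. split. apply ex_derive_id. apply ex_derive_const.
  - intros u v _. unfold pu. apply Derive_id.
  - intros u v _. unfold pv. apply Derive_const.
  - apply smooth_const.
  - apply smooth_const.
Qed.
Lemma smooth_id2 : forall D, open2 D -> smooth (fun a b => b) D.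
Proof.
  intros D HD. apply smooth_from_derivs with (fun _ _ => 0) (fun _ _ => 1); auto.
  - intros u v _. apply continuous_snd.
  - intros u v _. split. apply ex_derive_const. apply ex_derive_id.
  - intros u v _. unfold pu. apply Derive_const.
  - intros u v _. unfold pv. apply Derive_id.
  - apply smooth_const.
  - apply smooth_const.
Qed.

Lemma sm_dot : forall (V W : surface) D, open2 D -> sm3 V D -> sm3 W D ->
  smooth (fun u v => dot (V u v) (W u v)) D.
Proof.
  intros V W D HD [V1 [V2 V3]] [W1 [W2 W3]]. unfold dot.
  apply smooth_plus; auto. apply smooth_plus; auto. all: apply smooth_mult; auto.
Qed.

Lemma sm_fL : forall x D, regular_surface x D -> smooth (fL x) D.
Proof.
  intros x D Hreg. assert (HD : open2 D) by apply Hreg. unfold fL.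
  apply sm_dot; auto. apply sm3_Su, sm3_Su, sm3_x; auto. apply sm3_n; auto.
Qed.
Lemma sm_fN : forall x D, regular_surface x D -> smooth (fN x) D.
Proof.
  intros x D Hreg. assert (HD : open2 D) by apply Hreg. unfold fN.
  apply sm_dot; auto. apply sm3_Sv, sm3_Sv, sm3_x; auto. apply sm3_n; auto.
Qed.
Lemma sm_nu1 : forall x D, regular_surface x D -> smooth (nu1 x) D.
Proof.
  intros x D Hreg. assert (HD : open2 D) by apply Hreg. unfold nu1.
  apply smooth_div; auto. intros u v Huv. apply Rgt_not_eq, (fE_pos x D Hreg u v Huv).
  apply sm_fL; auto. apply (sm_fE x D); auto.
Qed.
Lemma sm_nu2 : forall x D, regular_surface x D -> smooth (nu2 x) D.
Proof.
  intros x D Hreg. assert (HD : open2 D) by apply Hreg. unfold nu2.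
  apply smooth_div; auto. intros u v Huv. apply Rgt_not_eq, (fG_pos x D Hreg u v Huv).
  apply sm_fN; auto. apply (sm_fG x D); auto.
Qed.

Lemma diff_partial : forall (h : R -> R -> R) u v, differentiable_pt h u v ->
  ex_derive (fun t => h t v) u /\ ex_derive (fun t => h u t) v.
Proof.
  intros h u v [lx [ly H]]. split.
  - exists (lx * 1 + ly * 0). apply is_derive_Reals.
    apply (derivable_pt_lim_comp_2d h (fun t => t) (fun _ => v) u lx ly 1 0).
    exact H. apply derivable_pt_lim_id. apply derivable_pt_lim_const.
  - exists (lx * 0 + ly * 1). apply is_derive_Reals.
    apply (derivable_pt_lim_comp_2d h (fun _ => u) (fun t => t) v lx ly 0 1).
    exact H. apply derivable_pt_lim_const. apply derivable_pt_lim_id.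
Qed.

Lemma inj_of_deriv : forall (J : R -> Prop) (f : R -> R), Defs.open_interval J ->
  (forall t, J t -> ex_derive f t /\ Derive f t <> 0) ->
  forall a b, J a -> J b -> f a = f b -> a = b.
Proof.
  intros J f [_ HJ] Hf a b Ha Hb Hab.
  destruct (Req_dec a b) as [e|ne]; [exact e|exfalso].
  destruct (MVT_gen f a b (Derive f)) as [c [Hc Heq]].
  - intros z Hz. assert (J z).
    { destruct (Rle_dec a b). rewrite Rmin_left, Rmax_right in Hz by lra. apply HJ with a b; auto; lra.
      rewrite Rmin_right, Rmax_left in Hz by lra. apply HJ with b a; auto; lra. }
    apply Derive_correct. apply Hf; auto.
  - intros z Hz. assert (J z).
    { destruct (Rle_dec a b). rewrite Rmin_left, Rmax_right in Hz by lra. apply HJ with a b; auto; lra.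
      rewrite Rmin_right, Rmax_left in Hz by lra. apply HJ with b a; auto; lra. }
    apply isd_cont_pt with (Derive f z). apply Derive_correct. apply Hf; auto.
  - assert (J c).
    { destruct (Rle_dec a b). rewrite Rmin_left, Rmax_right in Hc by lra. apply HJ with a b; auto; lra.
      rewrite Rmin_right, Rmax_left in Hc by lra. apply HJ with b a; auto; lra. }
    destruct (Hf c H) as [_ Hne]. rewrite Hab in Heq.
    assert (Derive f c * (b - a) = 0) by lra.
    apply Rmult_integral in H0. destruct H0; [apply Hne; exact H0|lra].
Qed.

Lemma const_of_deriv0 : forall (F : R -> R) a b,
  (forall t, Rmin a b <= t <= Rmax a b -> is_derive F t 0) -> F a = F b.
Proof.
  intros F a b H.
  destruct (MVT_gen F a b (fun _ => 0)) as [c [Hc Heq]].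
  - intros z Hz. apply H. lra.
  - intros z Hz. apply isd_cont_pt with 0. apply H, Hz.
  - lra.
Qed.

Lemma antider : forall (k : R -> R) c lo hi, lo < c < hi ->
  (forall t, lo < t < hi -> continuous k t) ->
  forall s, lo < s < hi -> is_derive (fun s => RInt k c s) s (k s).
Proof.
  intros k c lo hi Hc Hk s Hs.
  apply (is_derive_RInt k (fun s => RInt k c s) c s).
  - apply locally_interval with (Finite lo) (Finite hi); simpl; try lra.
    intros y Hy1 Hy2. apply (RInt_correct (V := R_CompleteNormedModule)). apply (ex_RInt_continuous (V := R_CompleteNormedModule)).
    intros z Hz. apply Hk. split.
    + eapply Rlt_le_trans; [|apply Hz]. apply Rmin_glb_lt; lra.
    + eapply Rle_lt_trans; [apply Hz|]. apply Rmax_lub_lt; lra.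
  - apply Hk, Hs.
Qed.

Lemma isd_val : forall (f : R -> R) (x l l' : R), is_derive f x l -> l = l' -> is_derive f x l'.
Proof. intros f x l l0 H E. rewrite <- E. exact H. Qed.
Lemma isd_plus : forall (f g : R -> R) (x df dg : R), is_derive f x df -> is_derive g x dg ->
  is_derive (fun t => f t + g t) x (df + dg).
Proof. intros. apply (is_derive_plus f g); auto. Qed.
Lemma isd_minus : forall (f g : R -> R) (x df dg : R), is_derive f x df -> is_derive g x dg ->
  is_derive (fun t => f t - g t) x (df - dg).
Proof. intros. apply (is_derive_minus f g); auto. Qed.
Lemma isd_comp : forall (f g : R -> R) (x df dg : R), is_derive f (g x) df -> is_derive g x dg ->
  is_derive (fun t => f (g t)) x (dg * df).
Proof. intros. apply (is_derive_comp f g); auto. Qed.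
Lemma isd_lnsqrt : forall (h : R -> R) (x dh : R), is_derive h x dh -> 0 < h x ->
  is_derive (fun t => ln (sqrt (h t))) x (dh / (2 * h x)).
Proof.
  intros h x dh Hd Hp.
  assert (Hs : 0 < sqrt (h x)) by (apply sqrt_lt_R0; exact Hp).
  apply isd_val with ((dh / (2 * sqrt (h x))) * / sqrt (h x)).
  - apply (isd_comp ln (fun t => sqrt (h t))). apply is_derive_ln, Hs. apply (is_derive_sqrt h x dh Hd Hp).
  - assert (E : sqrt (h x) * sqrt (h x) = h x) by (apply sqrt_sqrt; lra).
    set (q := sqrt (h x)) in *. rewrite <- E. field. lra.
Qed.
Lemma exd_isd : forall (f : R -> R) x, ex_derive f x -> is_derive f x (Derive f x).
Proof. intros. apply Derive_correct. auto. Qed.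

Section Build.
Variables (x : surface) (D : R -> R -> Prop) (I : R -> Prop) (f g : R -> R) (nu : R -> R -> R) (u0 v0 : R).
Hypothesis Hsrp : strongly_regular_principal x D.
Hypothesis Hwd : weingarten_data x D I f g nu.
Variables (e r : R) (psi : R -> R) (dl rho2 : R).
Hypothesis He : e = 1 \/ e = -1.
Hypothesis Hr : 0 < r.
Hypothesis Hsq : forall u v, Rabs (u - u0) <= r -> Rabs (v - v0) <= r -> D u v.
Hypothesis Hsign : forall u v, Rabs (u - u0) <= r -> Rabs (v - v0) <= r -> 0 < e * pu (nu1 x) u v.
Hypothesis Hpsi : forall s, e * nu1 x (u0 - r) v0 < s < e * nu1 x (u0 + r) v0 ->
  u0 - r < psi s < u0 + r /\ e * nu1 x (psi s) v0 = s /\ is_derive psi s (/ (e * pu (nu1 x) (psi s) v0)).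
Hypothesis Hdl : 0 < dl.
Hypothesis Hdl1 : e * nu1 x (u0 - r) v0 <= e * nu1 x u0 v0 - dl.
Hypothesis Hdl2 : e * nu1 x u0 v0 + dl <= e * nu1 x (u0 + r) v0.
Hypothesis Hrho : 0 < rho2 <= r.
Hypothesis Hrho2 : forall u v, Rabs (u - u0) < rho2 -> Rabs (v - v0) < rho2 -> Rabs (nu1 x u v - nu1 x u0 v0) < dl.

Definition c0 := nu1 x u0 v0.
Definition Ip (s : R) := c0 - dl < s < c0 + dl.
Definition gp (s : R) := nu2 x (psi (e * s)) v0.
Definition UU (u v : R) := u0 - rho2 < u < u0 + rho2 /\ v0 - rho2 < v < v0 + rho2.

Lemma HD : open2 D. Proof. apply Hsrp. Qed.
Lemma Hreg : regular_surface x D. Proof. apply Hsrp. Qed.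
Lemma sn1 : smooth (nu1 x) D. Proof. apply sm_nu1, Hreg. Qed.
Lemma sn2 : smooth (nu2 x) D. Proof. apply sm_nu2, Hreg. Qed.

Lemma UU_D : forall u v, UU u v -> D u v.
Proof. intros u v [h1 h2]. apply Hsq; apply Rabs_le; lra. Qed.

Lemma open2_rect : forall a b c d, open2 (fun u v => a < u < b /\ c < v < d).
Proof.
  intros a b c d. unfold open2.
  apply (open_and (fun p : R * R => a < fst p < b) (fun p : R * R => c < snd p < d)).
  - apply (open_comp (fun p : R * R => fst p) (fun u => a < u < b)).
    + intros p _. apply continuous_fst.
    + apply open_and. apply open_gt. apply open_lt.
  - apply (open_comp (fun p : R * R => snd p) (fun u => c < u < d)).
    + intros p _. apply continuous_snd.
    + apply open_and. apply open_gt. apply open_lt.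
Qed.

Lemma wdD : forall u v, D u v -> I (nu u v) /\ differentiable_pt nu u v /\ pu nu u v * pv nu u v <> 0 /\
  nu1 x u v = f (nu u v) /\ nu2 x u v = g (nu u v).
Proof. apply Hwd. Qed.
Lemma wdI : forall t, I t -> ex_derive f t /\ ex_derive g t /\ f t - g t > 0 /\ Derive f t * Derive g t <> 0.
Proof. apply Hwd. Qed.

Lemma pu_n2 : forall u v, D u v -> pu (nu2 x) u v = pu nu u v * Derive g (nu u v).
Proof.
  intros u v Huv. rewrite (pu_ext D (nu2 x) (fun a b => g (nu a b)) u v HD); [|intros a b Hab; exact (proj2 (proj2 (proj2 (proj2 (wdD a b Hab)))))|exact Huv].
  unfold pu. apply (Derive_comp g (fun t => nu t v) u).
  exact (proj1 (proj2 (wdI _ (proj1 (wdD u v Huv))))).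
  exact (proj1 (diff_partial nu u v (proj1 (proj2 (wdD u v Huv))))). 
Qed.
Lemma pv_n1 : forall u v, D u v -> pv (nu1 x) u v = pv nu u v * Derive f (nu u v).
Proof.
  intros u v Huv. rewrite (pv_ext D (nu1 x) (fun a b => f (nu a b)) u v HD); [|intros a b Hab; exact (proj1 (proj2 (proj2 (proj2 (wdD a b Hab)))))|exact Huv].
  unfold pv. apply (Derive_comp f (fun t => nu u t) v).
  exact (proj1 (wdI _ (proj1 (wdD u v Huv)))).
  exact (proj2 (diff_partial nu u v (proj1 (proj2 (wdD u v Huv))))). 
Qed.
Lemma pu_n1 : forall u v, D u v -> pu (nu1 x) u v = pu nu u v * Derive f (nu u v).
Proof.
  intros u v Huv. rewrite (pu_ext D (nu1 x) (fun a b => f (nu a b)) u v HD); [|intros a b Hab; exact (proj1 (proj2 (proj2 (proj2 (wdD a b Hab)))))|exact Huv].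
  unfold pu. apply (Derive_comp f (fun t => nu t v) u).
  exact (proj1 (wdI _ (proj1 (wdD u v Huv)))).
  exact (proj1 (diff_partial nu u v (proj1 (proj2 (wdD u v Huv))))).
Qed.
Lemma pu_n1_ne0 : forall u v, D u v -> pu (nu1 x) u v <> 0.
Proof.
  intros u v Huv. rewrite pu_n1 by exact Huv. destruct (wdD u v Huv) as [HI [_ [Hp _]]].
  destruct (wdI _ HI) as [_ [_ [_ Hq]]].
  intros H. apply Rmult_integral in H. destruct H as [H|H].
  apply Hp. rewrite H. ring. apply Hq. rewrite H. ring.
Qed.
Lemma pu_n2_ne0 : forall u v, D u v -> pu (nu2 x) u v <> 0.
Proof.
  intros u v Huv. rewrite pu_n2 by exact Huv. destruct (wdD u v Huv) as [HI [_ [Hp _]]].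
  destruct (wdI _ HI) as [_ [_ [_ Hq]]].
  intros H. apply Rmult_integral in H. destruct H as [H|H].
  apply Hp. rewrite H. ring. apply Hq. rewrite H. ring.
Qed.
Lemma pv_n1_ne0 : forall u v, D u v -> pv (nu1 x) u v <> 0.
Proof.
  intros u v Huv. rewrite pv_n1 by exact Huv. destruct (wdD u v Huv) as [HI [_ [Hp _]]].
  destruct (wdI _ HI) as [_ [_ [_ Hq]]].
  intros H. apply Rmult_integral in H. destruct H as [H|H].
  apply Hp. rewrite H. ring. apply Hq. rewrite H. ring.
Qed.

Lemma Ip_e : forall s, Ip s -> e * nu1 x (u0 - r) v0 < e * s < e * nu1 x (u0 + r) v0.
Proof. intros s Hs. unfold Ip, c0 in Hs. destruct He; subst; lra. Qed.

Lemma tpt : forall s, Ip s -> u0 - r < psi (e * s) < u0 + r /\ nu1 x (psi (e * s)) v0 = s.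
Proof.
  intros s Hs. destruct (Hpsi (e * s) (Ip_e s Hs)) as [H1 [H2 _]]. split; [exact H1|].
  destruct He; subst; lra.
Qed.
Lemma tD : forall s, Ip s -> D (psi (e * s)) v0.
Proof.
  intros s Hs. destruct (tpt s Hs) as [H1 _]. apply Hsq.
  apply Rabs_le; lra. rewrite Rminus_diag, Rabs_R0; lra.
Qed.
Lemma tsign : forall s, Ip s -> 0 < e * pu (nu1 x) (psi (e * s)) v0.
Proof.
  intros s Hs. destruct (tpt s Hs) as [H1 _]. apply Hsign.
  apply Rabs_le; lra. rewrite Rminus_diag, Rabs_R0; lra.
Qed.

Lemma gp_isd : forall s, Ip s ->
  is_derive gp s (pu (nu2 x) (psi (e * s)) v0 / pu (nu1 x) (psi (e * s)) v0).
Proof.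
  intros s Hs. unfold gp.
  assert (Hp1 := tsign s Hs).
  assert (He0 : e <> 0) by (destruct He; lra).
  apply isd_val with ((e * 1 * / (e * pu (nu1 x) (psi (e * s)) v0)) * pu (nu2 x) (psi (e * s)) v0).
  - apply (isd_comp (fun w => nu2 x w v0) (fun s => psi (e * s))).
    + apply exd_isd. apply (smooth_exu (nu2 x) D). apply sn2. apply tD, Hs.
    + apply (isd_comp psi (fun s => e * s)).
      * apply (Hpsi (e * s) (Ip_e s Hs)).
      * apply (is_derive_scal (fun t => t) s e 1). apply (is_derive_id (K := R_AbsRing)).
  - field. split; [|exact He0]. intros h. rewrite h in Hp1. lra.
Qed.
Lemma gp_ex : forall s, Ip s -> ex_derive gp s.
Proof. intros s Hs. eexists. apply gp_isd, Hs. Qed.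
Lemma gp_D_ne0 : forall s, Ip s -> Derive gp s <> 0.
Proof.
  intros s Hs. rewrite (is_derive_unique gp s _ (gp_isd s Hs)).
  assert (Hp1 := tsign s Hs). assert (H2 := pu_n2_ne0 _ _ (tD s Hs)).
  unfold Rdiv. intros h. apply Rmult_integral in h. destruct h as [h|h]. contradiction.
  apply Rinv_neq_0_compat in h; auto. intros h'. rewrite h' in Hp1. lra.
Qed.

Lemma f_inj : forall a b, I a -> I b -> f a = f b -> a = b.
Proof.
  apply (inj_of_deriv I f). apply Hwd.
  intros t Ht. destruct (wdI t Ht) as [H1 [_ [_ H2]]]. split; [exact H1|].
  intros h. apply H2. rewrite h. ring.
Qed.

Lemma Ip_n1 : forall u v, UU u v -> Ip (nu1 x u v).
Proof.
  intros u v [h1 h2]. unfold Ip, c0.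
  assert (H := Hrho2 u v ltac:(apply Rabs_def1; lra) ltac:(apply Rabs_def1; lra)). apply Rabs_def2 in H. lra.
Qed.

Lemma rel : forall u v, UU u v -> nu2 x u v = gp (nu1 x u v).
Proof.
  intros u v Huv. assert (Hs := Ip_n1 u v Huv). set (s := nu1 x u v) in *.
  destruct (tpt s Hs) as [_ Ht]. assert (HtD := tD s Hs). assert (HuD := UU_D u v Huv).
  unfold gp. set (t := psi (e * s)) in *.
  destruct (wdD t v0 HtD) as [It [_ [_ [Ef1 Eg1]]]].
  destruct (wdD u v HuD) as [Iu [_ [_ [Ef2 Eg2]]]].
  assert (nu t v0 = nu u v).
  { apply f_inj; auto. rewrite <- Ef1, <- Ef2. rewrite Ht. reflexivity. }
  rewrite Eg1, Eg2, H. reflexivity.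
Qed.

Lemma gap : forall s, Ip s -> 0 < s - gp s.
Proof.
  intros s Hs. destruct (tpt s Hs) as [_ Ht]. assert (HtD := tD s Hs).
  unfold gp. destruct (proj2 (proj2 Hsrp) _ _ HtD) as [H _]. rewrite Ht in H. lra.
Qed.

Lemma k_isd : forall s, Ip s -> is_derive (fun t => / (t - gp t)) s (- (1 - Derive gp s) / (s - gp s) ^ 2).
Proof.
  intros s Hs. apply (is_derive_inv (fun t => t - gp t)).
  apply isd_minus. apply (is_derive_id (K := R_AbsRing)). apply exd_isd, gp_ex, Hs.
  assert (H := gap s Hs). lra.
Qed.

Definition Phi (s : R) := RInt (fun t => / (t - gp t)) c0 s.
Definition Psi (s : R) := ln (s - gp s) - Phi s.

Lemma Phi_isd : forall s, Ip s -> is_derive Phi s (/ (s - gp s)).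
Proof.
  intros s Hs. unfold Phi. apply (antider (fun t => / (t - gp t)) c0 (c0 - dl) (c0 + dl)).
  lra. intros t Ht. apply exd_cont. eexists. apply k_isd. exact Ht. exact Hs.
Qed.

Lemma Psi_isd : forall s, Ip s -> is_derive Psi s (Derive gp s / (gp s - s)).
Proof.
  intros s Hs. unfold Psi. assert (H := gap s Hs).
  apply isd_val with ((1 - Derive gp s) * / (s - gp s) - / (s - gp s)).
  - apply isd_minus.
    + apply (isd_comp ln (fun s => s - gp s)). apply is_derive_ln, H.
      apply isd_minus. apply (is_derive_id (K := R_AbsRing)). apply exd_isd, gp_ex, Hs.
    + apply Phi_isd, Hs.
  - field. split; lra.
Qed.

Lemma oUU : open2 UU.
Proof. apply open2_rect. Qed.
Lemma regU : regular_surface x UU.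
Proof.
  destruct Hreg as [_ [h1 [h2 [h3 h4]]]]. split; [exact oUU|].
  split; [apply smooth_sub with D; [exact UU_D|exact h1]|].
  split; [apply smooth_sub with D; [exact UU_D|exact h2]|].
  split; [apply smooth_sub with D; [exact UU_D|exact h3]|].
  intros u v Huv. apply h4, UU_D, Huv.
Qed.
Lemma sn1U : smooth (nu1 x) UU. Proof. apply smooth_sub with D. exact UU_D. exact sn1. Qed.
Lemma sn2U : smooth (nu2 x) UU. Proof. apply smooth_sub with D. exact UU_D. exact sn2. Qed.
Lemma gapU : forall u v, UU u v -> 0 < nu1 x u v - nu2 x u v.
Proof. intros u v Huv. apply (proj2 (proj2 Hsrp)), UU_D, Huv. Qed.

Lemma PhiN_u : forall u v, UU u v ->
  is_derive (fun t => Phi (nu1 x t v)) u (pu (nu1 x) u v * / (nu1 x u v - nu2 x u v)).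
Proof.
  intros u v Huv. rewrite (rel u v Huv).
  apply (isd_comp Phi (fun t => nu1 x t v)). apply Phi_isd, Ip_n1, Huv.
  apply exd_isd. apply (smooth_exu _ UU u v sn1U Huv).
Qed.
Lemma PhiN_v : forall u v, UU u v ->
  is_derive (fun t => Phi (nu1 x u t)) v (pv (nu1 x) u v * / (nu1 x u v - nu2 x u v)).
Proof.
  intros u v Huv. rewrite (rel u v Huv).
  apply (isd_comp Phi (fun t => nu1 x u t)). apply Phi_isd, Ip_n1, Huv.
  apply exd_isd. apply (smooth_exv _ UU u v sn1U Huv).
Qed.

Lemma sm_PhiN : smooth (fun u v => Phi (nu1 x u v)) UU.
Proof.
  apply smooth_from_derivs with (fun u v => pu (nu1 x) u v * / (nu1 x u v - nu2 x u v))
                                (fun u v => pv (nu1 x) u v * / (nu1 x u v - nu2 x u v)).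
  - exact oUU.
  - intros u v Huv. apply (continuous_comp (fun p : R * R => nu1 x (fst p) (snd p)) Phi).
    apply (smooth_cont _ UU u v sn1U Huv). apply exd_cont. eexists. apply Phi_isd, Ip_n1, Huv.
  - intros u v Huv. split; eexists; [apply PhiN_u|apply PhiN_v]; exact Huv.
  - intros u v Huv. apply is_derive_unique, PhiN_u, Huv.
  - intros u v Huv. apply is_derive_unique, PhiN_v, Huv.
  - apply smooth_mult. exact oUU. apply smooth_pu, sn1U. apply smooth_inv. exact oUU.
    intros u v Huv. apply Rgt_not_eq, gapU, Huv. apply smooth_minus. exact oUU. exact sn1U. exact sn2U.
  - apply smooth_mult. exact oUU. apply smooth_pv, sn1U. apply smooth_inv. exact oUU.
    intros u v Huv. apply Rgt_not_eq, gapU, Huv. apply smooth_minus. exact oUU. exact sn1U. exact sn2U.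
Qed.

Definition Lam (u v : R) := ln (sqrt (fE x u v)) + Phi (nu1 x u v).
Definition Mf (u v : R) := ln (sqrt (fG x u v)) + Psi (nu1 x u v).

Lemma sm_lnsqrtE : smooth (fun u v => ln (sqrt (fE x u v))) UU.
Proof.
  apply smooth_ln. exact oUU. intros u v Huv. apply sqrt_lt_R0, (fE_pos x UU regU u v Huv).
  apply smooth_sqrt. exact oUU. intros u v Huv. apply (fE_pos x UU regU u v Huv).
  apply (sm_fE x UU oUU regU).
Qed.
Lemma sm_lnsqrtG : smooth (fun u v => ln (sqrt (fG x u v))) UU.
Proof.
  apply smooth_ln. exact oUU. intros u v Huv. apply sqrt_lt_R0, (fG_pos x UU regU u v Huv).
  apply smooth_sqrt. exact oUU. intros u v Huv. apply (fG_pos x UU regU u v Huv).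
  apply (sm_fG x UU oUU regU).
Qed.

Lemma sm_Lam : smooth Lam UU.
Proof. unfold Lam. apply smooth_plus. exact oUU. exact sm_lnsqrtE. exact sm_PhiN. Qed.

Lemma sm_Mf : smooth Mf UU.
Proof.
  apply smooth_ext with (fun u v => ln (sqrt (fG x u v)) + (ln (nu1 x u v - nu2 x u v) - Phi (nu1 x u v))).
  - exact oUU.
  - intros u v Huv. unfold Mf, Psi. rewrite <- (rel u v Huv). reflexivity.
  - apply smooth_plus. exact oUU. exact sm_lnsqrtG. apply smooth_minus. exact oUU.
    apply smooth_ln. exact oUU. exact gapU. apply smooth_minus. exact oUU. exact sn1U. exact sn2U.
    exact sm_PhiN.
Qed.

Lemma Lam_v : forall u v, UU u v -> is_derive (fun t => Lam u t) v 0.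
Proof.
  intros u v Huv. unfold Lam. assert (HuD := UU_D u v Huv).
  assert (HEp := fE_pos x UU regU u v Huv). assert (HGp := fG_pos x UU regU u v Huv).
  assert (sE := sm_fE x UU oUU regU). assert (sL := sm_fL x UU regU).
  assert (dE := exd_isd _ _ (smooth_exv (fE x) UU u v sE Huv)).
  assert (dL := exd_isd _ _ (smooth_exv (fL x) UU u v sL Huv)).
  assert (Hn1 : pv (nu1 x) u v = (pv (fL x) u v * fE x u v - fL x u v * pv (fE x) u v) / (fE x u v) ^ 2).
  { apply is_derive_unique. unfold nu1.
    apply (is_derive_div (fun t => fL x u t) (fun t => fE x u t)); [exact dL|exact dE|lra]. }
  assert (Cod := codazzi_u x D Hreg (fun a b h => proj1 (proj1 (proj2 Hsrp) a b h))
                   (fun a b h => proj2 (proj1 (proj2 Hsrp) a b h)) u v HuD).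
  assert (Hg := gapU u v Huv). unfold nu1, nu2 in Hg.
  apply isd_val with (pv (fE x) u v / (2 * fE x u v) + pv (nu1 x) u v * / (nu1 x u v - nu2 x u v)).
  - apply isd_plus. apply isd_lnsqrt; [exact dE|exact HEp]. apply PhiN_v, Huv.
  - rewrite Hn1. unfold nu1, nu2. unfold nu1, nu2 in Hg.
    set (E := fE x u v) in *. set (G := fG x u v) in *. set (L := fL x u v) in *.
    set (N := fN x u v) in *. set (Ev := pv (fE x) u v) in *. set (Lv := pv (fL x) u v) in *.
    assert (HLv : Lv = (G * (Ev / 2) * L + E * (Ev / 2) * N) / (E * G)).
    { rewrite <- Cod. field. split; lra. }
    assert (Hne : L * G - N * E <> 0).
    { intros h. assert (L / E - N / G = (L * G - N * E) / (E * G)) by (field; split; lra).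
      rewrite h in H. unfold Rdiv in H. rewrite Rmult_0_l in H. lra. }
    rewrite HLv. field. repeat split; try lra; exact Hne.
Qed.

Lemma Mf_u : forall u v, UU u v -> is_derive (fun t => Mf t v) u 0.
Proof.
  intros u v Huv. unfold Mf. assert (HuD := UU_D u v Huv).
  assert (HEp := fE_pos x UU regU u v Huv). assert (HGp := fG_pos x UU regU u v Huv).
  assert (sG := sm_fG x UU oUU regU). assert (sN := sm_fN x UU regU).
  assert (dG := exd_isd _ _ (smooth_exu (fG x) UU u v sG Huv)).
  assert (dN := exd_isd _ _ (smooth_exu (fN x) UU u v sN Huv)).
  assert (Hn2 : pu (nu2 x) u v = (pu (fN x) u v * fG x u v - fN x u v * pu (fG x) u v) / (fG x u v) ^ 2).
  { apply is_derive_unique. unfold nu2.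
    apply (is_derive_div (fun t => fN x t v) (fun t => fG x t v)); [exact dN|exact dG|lra]. }
  assert (Hgc : pu (nu2 x) u v = pu (nu1 x) u v * Derive gp (nu1 x u v)).
  { rewrite (pu_ext UU (nu2 x) (fun a b => gp (nu1 x a b)) u v oUU); [| |exact Huv].
    - unfold pu. apply (Derive_comp gp (fun t => nu1 x t v) u).
      apply gp_ex, Ip_n1, Huv. apply (smooth_exu _ UU u v sn1U Huv).
    - intros a b Hab. apply rel, Hab. }
  assert (Cod := codazzi_v x D Hreg (fun a b h => proj1 (proj1 (proj2 Hsrp) a b h))
                   (fun a b h => proj2 (proj1 (proj2 Hsrp) a b h)) u v HuD).
  assert (Hg := gapU u v Huv).
  assert (Hrl := rel u v Huv).
  apply isd_val with (pu (fG x) u v / (2 * fG x u v) + pu (nu1 x) u v * (Derive gp (nu1 x u v) / (gp (nu1 x u v) - nu1 x u v))).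
  - apply isd_plus. apply (isd_lnsqrt (fun t => fG x t v)); [exact dG|exact HGp].
    apply (isd_comp Psi (fun t => nu1 x t v)). apply Psi_isd, Ip_n1, Huv.
    apply exd_isd. apply (smooth_exu _ UU u v sn1U Huv).
  - rewrite <- Hrl.
    replace (pu (nu1 x) u v * (Derive gp (nu1 x u v) / (nu2 x u v - nu1 x u v)))
      with (pu (nu2 x) u v / (nu2 x u v - nu1 x u v)) by (rewrite Hgc; field; lra).
    rewrite Hn2. unfold nu1, nu2. unfold nu1, nu2 in Hg.
    set (E := fE x u v) in *. set (G := fG x u v) in *. set (L := fL x u v) in *.
    set (N := fN x u v) in *. set (Gu := pu (fG x) u v) in *. set (Nu := pu (fN x) u v) in *.
    assert (HNu : Nu = (E * (Gu / 2) * N + G * (Gu / 2) * L) / (E * G)).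
    { rewrite <- Cod. field. split; lra. }
    assert (Hne : L * G - N * E <> 0).
    { intros h. assert (L / E - N / G = (L * G - N * E) / (E * G)) by (field; split; lra).
      rewrite h in H. unfold Rdiv in H. rewrite Rmult_0_l in H. lra. }
    rewrite HNu. field. repeat split; try lra; exact Hne.
Qed.

Lemma Lam_const : forall u v, UU u v -> Lam u v = Lam u v0.
Proof.
  intros u v Huv. symmetry. apply (const_of_deriv0 (fun t => Lam u t) v0 v).
  intros t Ht. apply Lam_v. destruct Huv as [h1 h2]. split; [exact h1|].
  split.
  - eapply Rlt_le_trans; [|apply Ht]. apply Rmin_glb_lt; lra.
  - eapply Rle_lt_trans; [apply Ht|]. apply Rmax_lub_lt; lra.
Qed.
Lemma Mf_const : forall u v, UU u v -> Mf u v = Mf u0 v.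
Proof.
  intros u v Huv. symmetry. apply (const_of_deriv0 (fun t => Mf t v) u0 u).
  intros t Ht. apply Mf_u. destruct Huv as [h1 h2]. split; [|exact h2].
  split.
  - eapply Rlt_le_trans; [|apply Ht]. apply Rmin_glb_lt; lra.
  - eapply Rle_lt_trans; [apply Ht|]. apply Rmax_lub_lt; lra.
Qed.

Definition rho := rho2 / 2.
Definition Hf (u : R) := exp (Lam u v0).
Definition Kf (v : R) := exp (Mf u0 v).
Definition Av (u : R) := RInt Hf u0 u.
Definition Bv (v : R) := RInt Kf v0 v.
Definition Vr (u v : R) := u0 - rho < u < u0 + rho /\ v0 - rho < v < v0 + rho.
Definition Wr (a b : R) := Av (u0 - rho) < a < Av (u0 + rho) /\ Bv (v0 - rho) < b < Bv (v0 + rho).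
Definition StU (u v : R) := u0 - rho2 < u < u0 + rho2.
Definition StV (u v : R) := v0 - rho2 < v < v0 + rho2.

Lemma rho_pos : 0 < rho. Proof. unfold rho. lra. Qed.
Lemma Vr_UU : forall u v, Vr u v -> UU u v.
Proof. intros u v [h1 h2]. unfold rho in *. split; lra. Qed.
Lemma oStU : open2 StU.
Proof.
  unfold open2, StU. apply (open_comp (fun p : R * R => fst p) (fun u => u0 - rho2 < u < u0 + rho2)).
  intros p _. apply continuous_fst. apply open_and. apply open_gt. apply open_lt.
Qed.
Lemma oStV : open2 StV.
Proof.
  unfold open2, StV. apply (open_comp (fun p : R * R => snd p) (fun u => v0 - rho2 < u < v0 + rho2)).
  intros p _. apply continuous_snd. apply open_and. apply open_gt. apply open_lt.
Qed.

Lemma sm_Hf2 : smooth (fun u v => Hf u) StU.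
Proof.
  unfold Hf. apply smooth_exp. exact oStU.
  apply (smooth_comp Lam UU StU (fun u => u) (fun _ => v0)).
  exact oStU. intros a b Hab. unfold StU in Hab. split; [exact Hab|lra].
  exact sm_Lam. apply smooth_id1, oStU. apply smooth_const.
Qed.
Lemma sm_Kf2 : smooth (fun u v => Kf v) StV.
Proof.
  unfold Kf. apply smooth_exp. exact oStV.
  apply (smooth_comp Mf UU StV (fun _ => u0) (fun v => v)).
  exact oStV. intros a b Hab. unfold StV in Hab. split; [lra|exact Hab].
  exact sm_Mf. apply smooth_const. apply smooth_id2, oStV.
Qed.
Lemma Hf_pos : forall u, 0 < Hf u. Proof. intros; apply exp_pos. Qed.
Lemma Kf_pos : forall v, 0 < Kf v. Proof. intros; apply exp_pos. Qed.

Lemma Hf_cont : forall u, u0 - rho2 < u < u0 + rho2 -> continuous Hf u.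
Proof.
  intros u Hu. apply exd_cont. apply (smooth_exu (fun u v => Hf u) StU u 0 sm_Hf2). exact Hu.
Qed.
Lemma Kf_cont : forall v, v0 - rho2 < v < v0 + rho2 -> continuous Kf v.
Proof.
  intros v Hv. apply exd_cont. apply (smooth_exv (fun u v => Kf v) StV 0 v sm_Kf2). exact Hv.
Qed.

Lemma Av_isd : forall u, u0 - rho2 < u < u0 + rho2 -> is_derive Av u (Hf u).
Proof.
  intros u Hu. unfold Av. apply (antider Hf u0 (u0 - rho2) (u0 + rho2)). lra. exact Hf_cont. exact Hu.
Qed.
Lemma Bv_isd : forall v, v0 - rho2 < v < v0 + rho2 -> is_derive Bv v (Kf v).
Proof.
  intros v Hv. unfold Bv. apply (antider Kf v0 (v0 - rho2) (v0 + rho2)). lra. exact Kf_cont. exact Hv.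
Qed.

Lemma inv_A : exists al : R -> R,
   (forall s, Av (u0 - rho) < s < Av (u0 + rho) -> u0 - rho < al s < u0 + rho /\ Av (al s) = s /\ is_derive al s (/ Hf (al s))) /\
   (forall t, u0 - rho < t < u0 + rho -> al (Av t) = t).
Proof.
  apply inv_fun. assert (H := rho_pos). lra.
  intros t Ht. apply Av_isd. unfold rho in Ht. lra.
  intros t _. apply Hf_pos.
Qed.
Lemma inv_B : exists be : R -> R,
   (forall s, Bv (v0 - rho) < s < Bv (v0 + rho) -> v0 - rho < be s < v0 + rho /\ Bv (be s) = s /\ is_derive be s (/ Kf (be s))) /\
   (forall t, v0 - rho < t < v0 + rho -> be (Bv t) = t).
Proof.
  apply inv_fun. assert (H := rho_pos). lra.
  intros t Ht. apply Bv_isd. unfold rho in Ht. lra.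
  intros t _. apply Kf_pos.
Qed.

Lemma Av_mono : forall t1 t2, u0 - rho <= t1 -> t1 < t2 -> t2 <= u0 + rho -> Av t1 < Av t2.
Proof.
  apply (mono_of_deriv Av Hf). intros t Ht. apply Av_isd. assert (H := rho_pos). unfold rho in *. lra.
  intros; apply Hf_pos.
Qed.
Lemma Bv_mono : forall t1 t2, v0 - rho <= t1 -> t1 < t2 -> t2 <= v0 + rho -> Bv t1 < Bv t2.
Proof.
  apply (mono_of_deriv Bv Kf). intros t Ht. apply Bv_isd. assert (H := rho_pos). unfold rho in *. lra.
  intros; apply Kf_pos.
Qed.

Lemma oWr : open2 Wr.
Proof. apply open2_rect. Qed.
Lemma oVr : open2 Vr.
Proof. apply open2_rect. Qed.

Lemma al_smooth : forall al : R -> R,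
  (forall s, Av (u0 - rho) < s < Av (u0 + rho) -> u0 - rho < al s < u0 + rho /\ Av (al s) = s /\ is_derive al s (/ Hf (al s))) ->
  smooth (fun a b => al a) Wr.
Proof.
  intros al Hal k.
  assert (Hc : forall a b, Wr a b -> continuous (fun p : R * R => al (fst p)) (a, b)).
  { intros a b Hab. apply (continuous_comp (fun p : R * R => fst p) al). apply continuous_fst.
    apply exd_cont. eexists. apply (Hal a). apply Hab. }
  assert (Hsi : smooth (fun u v => / Hf u) StU).
  { apply smooth_inv. exact oStU. intros; apply Rgt_not_eq, Hf_pos. exact sm_Hf2. }
  induction k.
  - exact Hc.
  - split; [exact Hc|split;[|split]].
    + intros a b Hab. split. eexists. apply (Hal a). apply Hab. apply ex_derive_const.
    + apply Ck_ext with (fun a b => / Hf (al a)). exact oWr.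
      * intros a b Hab. symmetry. apply is_derive_unique. apply (Hal a). apply Hab.
      * apply (Ck_comp k (fun u v => / Hf u) StU Wr al (fun b => b)).
        exact oWr. intros a b Hab. destruct (Hal a (proj1 Hab)) as [h _]. unfold StU, rho in *. lra.
        apply Hsi. exact IHk. apply smooth_id2, oWr.
    + apply Ck_ext with (fun _ _ => 0). exact oWr.
      * intros a b Hab. unfold pv. symmetry. apply Derive_const.
      * apply Ck_const.
Qed.
Lemma be_smooth : forall be : R -> R,
  (forall s, Bv (v0 - rho) < s < Bv (v0 + rho) -> v0 - rho < be s < v0 + rho /\ Bv (be s) = s /\ is_derive be s (/ Kf (be s))) ->
  smooth (fun a b => be b) Wr.
Proof.
  intros be Hbe k.
  assert (Hc : forall a b, Wr a b -> continuous (fun p : R * R => be (snd p)) (a, b)).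
  { intros a b Hab. apply (continuous_comp (fun p : R * R => snd p) be). apply continuous_snd.
    apply exd_cont. eexists. apply (Hbe b). apply Hab. }
  assert (Hsi : smooth (fun u v => / Kf v) StV).
  { apply smooth_inv. exact oStV. intros; apply Rgt_not_eq, Kf_pos. exact sm_Kf2. }
  induction k.
  - exact Hc.
  - split; [exact Hc|split;[|split]].
    + intros a b Hab. split. apply ex_derive_const. eexists. apply (Hbe b). apply Hab.
    + apply Ck_ext with (fun _ _ => 0). exact oWr.
      * intros a b Hab. unfold pu. symmetry. apply Derive_const.
      * apply Ck_const.
    + apply Ck_ext with (fun a b => / Kf (be b)). exact oWr.
      * intros a b Hab. symmetry. apply is_derive_unique. apply (Hbe b). apply Hab.
      * apply (Ck_comp k (fun u v => / Kf v) StV Wr (fun a => a) be).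
        exact oWr. intros a b Hab. destruct (Hbe b (proj2 Hab)) as [h _]. unfold StV, rho in *. lra.
        apply Hsi. apply smooth_id1, oWr. exact IHk.
Qed.

Lemma Av_smooth : smooth (fun u v => Av u) Vr.
Proof.
  apply smooth_from_derivs with (fun u v => Hf u) (fun _ _ => 0).
  - exact oVr.
  - intros u v Huv. apply (continuous_comp (fun p : R * R => fst p) Av). apply continuous_fst.
    apply exd_cont. eexists. apply Av_isd. destruct Huv. unfold rho in *. simpl. lra.
  - intros u v Huv. split. eexists. apply Av_isd. destruct Huv. unfold rho in *. lra. apply ex_derive_const.
  - intros u v Huv. apply is_derive_unique, Av_isd. destruct Huv. unfold rho in *. lra.
  - intros u v Huv. unfold pv. apply Derive_const.
  - apply smooth_sub with StU. intros u v [h _]. unfold StU, rho in *. lra. exact sm_Hf2.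
  - apply smooth_const.
Qed.
Lemma Bv_smooth : smooth (fun u v => Bv v) Vr.
Proof.
  apply smooth_from_derivs with (fun _ _ => 0) (fun u v => Kf v).
  - exact oVr.
  - intros u v Huv. apply (continuous_comp (fun p : R * R => snd p) Bv). apply continuous_snd.
    apply exd_cont. eexists. apply Bv_isd. destruct Huv. unfold rho in *. simpl. lra.
  - intros u v Huv. split. apply ex_derive_const. eexists. apply Bv_isd. destruct Huv. unfold rho in *. lra.
  - intros u v Huv. unfold pu. apply Derive_const.
  - intros u v Huv. apply is_derive_unique, Bv_isd. destruct Huv. unfold rho in *. lra.
  - apply smooth_const.
  - apply smooth_sub with StV. intros u v [_ h]. unfold StV, rho in *. lra. exact sm_Kf2.
Qed.

Lemma reg_sub : forall (D' : R -> R -> Prop), open2 D' -> (forall u v, D' u v -> D u v) -> regular_surface x D'.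
Proof.
  intros D' HD' Hs. destruct Hreg as [_ [h1 [h2 [h3 h4]]]]. split; [exact HD'|].
  split; [apply smooth_sub with D; [exact Hs|exact h1]|].
  split; [apply smooth_sub with D; [exact Hs|exact h2]|].
  split; [apply smooth_sub with D; [exact Hs|exact h3]|].
  intros u v Huv. apply h4, Hs, Huv.
Qed.
Lemma srp_sub : forall (D' : R -> R -> Prop), open2 D' -> (forall u v, D' u v -> D u v) -> strongly_regular_principal x D'.
Proof.
  intros D' HD' Hs. split; [apply reg_sub; assumption|split].
  intros u v Huv. apply (proj1 (proj2 Hsrp)), Hs, Huv.
  intros u v Huv. apply (proj2 (proj2 Hsrp)), Hs, Huv.
Qed.

Lemma Vr_D : forall u v, Vr u v -> D u v.
Proof. intros u v H. apply UU_D, Vr_UU, H. Qed.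

Lemma build_final : exists (V W : R -> R -> Prop) (theta eta : R -> R -> R * R),
  V u0 v0 /\ (forall u v, V u v -> D u v) /\ diffeo theta eta W V /\ geometric_principal (reparam x theta) W.
Proof.
  destruct inv_A as [al [Hal1 Hal2]]. destruct inv_B as [be [Hbe1 Hbe2]].
  assert (Hrp := rho_pos).
  assert (HWV : forall a b, Wr a b -> Vr (al a) (be b)).
  { intros a b [h1 h2]. destruct (Hal1 a h1) as [k1 _]. destruct (Hbe1 b h2) as [k2 _]. split; lra. }
  assert (Halp : forall a b, Wr a b -> 0 < Derive al a).
  { intros a b [h1 h2]. rewrite (is_derive_unique al a _ (proj2 (proj2 (Hal1 a h1)))).
    apply Rinv_0_lt_compat, Hf_pos. }
  assert (Hbep : forall a b, Wr a b -> 0 < Derive be b).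
  { intros a b [h1 h2]. rewrite (is_derive_unique be b _ (proj2 (proj2 (Hbe1 b h2)))).
    apply Rinv_0_lt_compat, Kf_pos. }
  assert (sal := al_smooth al Hal1). assert (sbe := be_smooth be Hbe1).
  assert (HregV : regular_surface x Vr) by (apply reg_sub; [exact oVr|exact Vr_D]).
  assert (HsrpV : strongly_regular_principal x Vr) by (apply srp_sub; [exact oVr|exact Vr_D]).
  assert (sn1V : smooth (nu1 x) Vr) by (apply smooth_sub with D; [exact Vr_D|exact sn1]).
  exists Vr, Wr, (fun a b => (al a, be b)), (fun u v => (Av u, Bv v)).
  split; [split; lra|]. split; [exact Vr_D|]. split.
  -
    split; [exact oWr|]. split; [exact oVr|].
    split; [exact sal|]. split; [exact sbe|]. split; [exact Av_smooth|]. split; [exact Bv_smooth|].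
    split.
    + intros a b Hab. split; [exact (HWV a b Hab)|]. simpl.
      destruct Hab as [h1 h2]. rewrite (proj1 (proj2 (Hal1 a h1))), (proj1 (proj2 (Hbe1 b h2))). reflexivity.
    + intros u v [h1 h2]. simpl. split.
      * split; split.
        -- apply Av_mono; lra.
        -- apply Av_mono; lra.
        -- apply Bv_mono; lra.
        -- apply Bv_mono; lra.
      * rewrite (Hal2 u h1), (Hbe2 v h2). reflexivity.
  -
    split.
    { exact (srp_y x Vr Wr al be oVr oWr HWV sal sbe Halp Hbep HregV HsrpV). }
    exists Ip, (fun s => s), gp, (fun a b => nu1 x (al a) (be b)), Phi, Psi.
    split; [|split; [|split]].
    + split; [|split].
      * split.
        -- unfold Ip. apply open_and. apply open_gt. apply open_lt.
        -- intros a b c Ha Hc Hb. unfold Ip in *. lra.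
      * intros t Ht. split; [apply ex_derive_id|split; [apply gp_ex, Ht|split]].
        -- cbv beta. apply Rlt_gt. apply gap, Ht.
        -- change (Derive (fun s : R => s) t) with (Derive id t). rewrite Derive_id.
           rewrite Rmult_1_l. apply gp_D_ne0, Ht.
      * intros a b Hab. assert (HV := HWV a b Hab). assert (HU := Vr_UU _ _ HV).
        split; [apply Ip_n1, HU|]. split.
        -- apply smooth_diff with Wr. exact oWr.
           exact (smooth_comp (nu1 x) Vr Wr al be oWr HWV sn1V sal sbe). exact Hab.
        -- split.
           ++ rewrite (pu_comp Vr Wr al be HWV sal (nu1 x) a b sn1V Hab).
              rewrite (pv_comp Vr Wr al be HWV sbe (nu1 x) a b sn1V Hab).
              assert (h1 := Halp a b Hab). assert (h2 := Hbep a b Hab).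
              assert (h3 : 0 < e * pu (nu1 x) (al a) (be b)).
              { destruct HV as [k1 k2]. unfold rho in *. apply Hsign; apply Rabs_le; lra. }
              assert (h4 := pv_n1_ne0 _ _ (Vr_D _ _ HV)).
              assert (h5 : pu (nu1 x) (al a) (be b) <> 0) by (intros z; rewrite z in h3; lra).
              intros z. repeat (apply Rmult_integral in z; destruct z as [z|z]); lra.
           ++ split.
              ** exact (nu1_y x Vr Wr al be oWr HWV sal sbe Halp Hbep HregV a b Hab).
              ** rewrite (nu2_y x Vr Wr al be oWr HWV sal sbe Halp Hbep HregV a b Hab). apply rel, HU.
    + intros t Ht. apply isd_val with (/ (t - gp t)). apply Phi_isd, Ht.
      change (Derive (fun s : R => s) t) with (Derive id t). rewrite Derive_id.
      assert (h := gap t Ht). field. lra.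
    + intros t Ht. apply Psi_isd, Ht.
    + exists 0, 0. intros a b Hab. assert (HV := HWV a b Hab). assert (HU := Vr_UU _ _ HV).
      destruct Hab as [h1 h2].
      assert (Da : Derive al a = / Hf (al a)) by (apply is_derive_unique, (Hal1 a h1)).
      assert (Db : Derive be b = / Kf (be b)) by (apply is_derive_unique, (Hbe1 b h2)).
      split.
      * unfold lam. rewrite (fE_y x Vr Wr al be HWV sal HregV a b (conj h1 h2)).
        assert (HE := fE_pos x Vr HregV _ _ HV).
        rewrite Da. rewrite sqrt_sq_mult by (try apply Rinv_0_lt_compat, Hf_pos; lra).
        rewrite ln_mult by (try apply Rinv_0_lt_compat, Hf_pos; apply sqrt_lt_R0; lra).
        unfold Hf. rewrite ln_Rinv by apply exp_pos. rewrite ln_exp.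
        assert (HL := Lam_const _ _ HU). unfold Lam in *. lra.
      * unfold mu. rewrite (fG_y x Vr Wr al be HWV sbe HregV a b (conj h1 h2)).
        assert (HG := fG_pos x Vr HregV _ _ HV).
        rewrite Db. rewrite sqrt_sq_mult by (try apply Rinv_0_lt_compat, Kf_pos; lra).
        rewrite ln_mult by (try apply Rinv_0_lt_compat, Kf_pos; apply sqrt_lt_R0; lra).
        unfold Kf. rewrite ln_Rinv by apply exp_pos. rewrite ln_exp.
        assert (HM := Mf_const _ _ HU). unfold Mf in *. lra.
Qed.
End Build.

Theorem theorem4p4 :
  forall (x : surface) (D : R -> R -> Prop),
    strongly_regular_weingarten x D ->
    forall u0 v0, D u0 v0 ->
      exists (V W : R -> R -> Prop) (theta eta : R -> R -> R * R),
        V u0 v0 /\ (forall u v, V u v -> D u v) /\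
        diffeo theta eta W V /\
        geometric_principal (reparam x theta) W.
Proof.
  intros x D [Hsrp [I [f [g [nu Hwd]]]]] u0 v0 Hd0.
  assert (HD0 := HD x D Hsrp). assert (Sn1 := sn1 x D Hsrp).
  set (p0 := pu (nu1 x) u0 v0).
  assert (Hp0 : p0 <> 0) by apply (pu_n1_ne0 x D I f g nu Hsrp Hwd u0 v0 Hd0).
  set (e := if Rlt_dec 0 p0 then 1 else -1).
  assert (He : e = 1 \/ e = -1) by (unfold e; destruct (Rlt_dec 0 p0); auto).
  assert (Hep : 0 < e * p0) by (unfold e; destruct (Rlt_dec 0 p0); lra).
  assert (Hc1 : continuity_2d_pt (pu (nu1 x)) u0 v0).
  { apply cont_2d. apply (smooth_cont _ D u0 v0 (smooth_pu D _ Sn1) Hd0). }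
  assert (Hap : 0 < Rabs p0) by (apply Rabs_pos_lt, Hp0).
  destruct (Hc1 (mkposreal _ Hap)) as [d1 Hd1]. simpl in Hd1.
  destruct (open2_loc D u0 v0 HD0 Hd0) as [d2 Hd2].
  set (r := Rmin d1 d2 / 2).
  assert (Hr : 0 < r) by (unfold r; assert (h := Rmin_pos d1 d2 (cond_pos d1) (cond_pos d2)); lra).
  assert (Hr1 : r < d1) by (unfold r; assert (h := Rmin_l d1 d2); assert (h' := Rmin_pos d1 d2 (cond_pos d1) (cond_pos d2)); lra).
  assert (Hr2 : r < d2) by (unfold r; assert (h := Rmin_r d1 d2); assert (h' := Rmin_pos d1 d2 (cond_pos d1) (cond_pos d2)); lra).
  assert (Hsq : forall u v, Rabs (u - u0) <= r -> Rabs (v - v0) <= r -> D u v).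
  { intros u v h1 h2. apply Hd2; lra. }
  assert (Hsign : forall u v, Rabs (u - u0) <= r -> Rabs (v - v0) <= r -> 0 < e * pu (nu1 x) u v).
  { intros u v h1 h2. assert (h := Hd1 u v ltac:(lra) ltac:(lra)). fold p0 in h.
    apply Rabs_def2 in h. unfold e in *. destruct (Rlt_dec 0 p0).
    - rewrite Rabs_right in h by lra. lra.
    - rewrite Rabs_left in h by lra. lra. }
  set (phi := fun t => e * nu1 x t v0).
  set (dphi := fun t => e * pu (nu1 x) t v0).
  assert (Hphid : forall t, u0 - r <= t <= u0 + r -> is_derive phi t (dphi t)).
  { intros t Ht. unfold phi, dphi. apply (is_derive_scal (fun t => nu1 x t v0)).
    apply exd_isd. apply (smooth_exu _ D t v0 Sn1). apply Hsq. apply Rabs_le; lra.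
    rewrite Rminus_diag, Rabs_R0; lra. }
  assert (Hphip : forall t, u0 - r <= t <= u0 + r -> 0 < dphi t).
  { intros t Ht. unfold dphi. apply Hsign. apply Rabs_le; lra. rewrite Rminus_diag, Rabs_R0; lra. }
  destruct (inv_fun phi dphi (u0 - r) (u0 + r) ltac:(lra) Hphid Hphip) as [psi [Hpsi _]].
  assert (Hmono := mono_of_deriv phi dphi (u0 - r) (u0 + r) Hphid Hphip).
  assert (Hm1 : phi (u0 - r) < phi u0) by (apply Hmono; lra).
  assert (Hm2 : phi u0 < phi (u0 + r)) by (apply Hmono; lra).
  set (dl := Rmin (phi (u0 + r) - phi u0) (phi u0 - phi (u0 - r))).
  assert (Hdl : 0 < dl) by (unfold dl; apply Rmin_pos; lra).
  assert (Hdl1 : e * nu1 x (u0 - r) v0 <= e * nu1 x u0 v0 - dl).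
  { assert (h := Rmin_r (phi (u0 + r) - phi u0) (phi u0 - phi (u0 - r))). fold dl in h. unfold phi in *. lra. }
  assert (Hdl2 : e * nu1 x u0 v0 + dl <= e * nu1 x (u0 + r) v0).
  { assert (h := Rmin_l (phi (u0 + r) - phi u0) (phi u0 - phi (u0 - r))). fold dl in h. unfold phi in *. lra. }
  assert (Hc2 : continuity_2d_pt (nu1 x) u0 v0).
  { apply cont_2d. apply (smooth_cont _ D u0 v0 Sn1 Hd0). }
  destruct (Hc2 (mkposreal _ Hdl)) as [d3 Hd3]. simpl in Hd3.
  set (rho2 := Rmin d3 r).
  assert (Hrho : 0 < rho2 <= r) by (unfold rho2; split; [apply Rmin_pos; [apply cond_pos|lra]|apply Rmin_r]).
  assert (Hrho2 : forall u v, Rabs (u - u0) < rho2 -> Rabs (v - v0) < rho2 -> Rabs (nu1 x u v - nu1 x u0 v0) < dl).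
  { intros u v h1 h2. assert (h := Rmin_l d3 r). fold rho2 in h. apply Hd3; lra. }
  apply (build_final x D I f g nu u0 v0 Hsrp Hwd e r psi dl rho2 He Hr Hsq Hsign Hpsi Hdl Hdl1 Hdl2 Hrho Hrho2).
Qed.
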